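(* Let $0<q<1$ and $\nu\in\mathbb{R}$. Define, for $z\in\mathbb{C}\setminus(-\infty,0]$ (principal branches of powers), $$I_\nu^{(3)}((1-q^2)z;q^2)=\sum_{k=0}^\infty\frac{q^{k(\nu+k)}(1-q^2)^k(z/2)^{\nu+2k}}{(q^2;q^2)_k\,\Gamma_{q^2}(\nu+k+1)},$$ and, for non-integer $\nu$, $$K_\nu^{(3)}((1-q^2)z;q^2)=\tfrac12 q^{-\nu^2+\nu}\Gamma_{q^2}(\nu)\Gamma_{q^2}(1-\nu)\left[I_{-\nu}^{(3)}((1-q^2)z;q^2)-I_\nu^{(3)}((1-q^2)z;q^2)\right],$$ extended to integer $\nu=n$ by taking the limit $\nu\to n$. Then $$\frac{2}{(1+q)z}\,\partial_q\!\left[z^\nu K_\nu^{(3)}((1-q^2)z;q^2)\right]=-q^{-\frac{\nu-1}{2}}z^{\nu-1}K_{\nu-1}^{(3)}((1-q^2)q^{1/2}z;q^2),$$ $$\frac{2}{(1+q)z}\,\partial_q\!\left[z^{-\nu} K_\nu^{(3)}((1-q^2)z;q^2)\right]=-q^{\frac{\nu+1}{2}}z^{-\nu-1}K_{\nu+1}^{(3)}((1-q^2)q^{1/2}z;q^2).$$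
   Context: $(a;q)_k=\prod_{j=0}^{k-1}(1-aq^j)$, $(a;q)_\infty=\prod_{j\ge0}(1-aq^j)$. The $q$-Gamma function is $\Gamma_{q}(x)=\frac{(q;q)_\infty}{(q^x;q)_\infty}(1-q)^{1-x}$, used here with base $q^2$. The $q$-derivative is $\partial_q f(z)=\frac{f(z)-f(qz)}{(1-q)z}$, applied to the function of $z$ in brackets. *)

(* Defs.v *)
From Stdlib Require Import Reals.
From Coquelicot Require Import Coquelicot.
Open Scope R_scope.

Fixpoint qpoch (a q : R) (k : nat) : R :=
  match k with
  | O => 1
  | S k' => qpoch a q k' * (1 - a * q ^ k')
  end.

Definition qpoch_inf (a q : R) : R := Lim_seq (fun k => qpoch a q k).

Definition qGamma (Q x : R) : R :=
  qpoch_inf Q Q / qpoch_inf (Rpower Q x) Q * Rpower (1 - Q) (1 - x).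

Definition slit_plane (z : C) : Prop := ~ (Im z = 0 /\ Re z <= 0).

Definition Carg (z : C) : R := 2 * atan (Im z / (Cmod z + Re z)).

Definition Cpow_pr (z : C) (a : R) : C :=
  (Rpower (Cmod z) a * cos (a * Carg z), Rpower (Cmod z) a * sin (a * Carg z)).

Definition CSeries (u : nat -> C) : C :=
  (Series (fun k => Re (u k)), Series (fun k => Im (u k))).

(* Iq3 q nu z  =  I_nu^(3)((1-q^2) z; q^2) *)
Definition Iq3 (q nu : R) (z : C) : C :=
  CSeries (fun k =>
    Cmult (RtoC (Rpower q (INR k * (nu + INR k)) * (1 - q ^ 2) ^ k
                 / (qpoch (q ^ 2) (q ^ 2) k * qGamma (q ^ 2) (nu + INR k + 1))))
          (Cpow_pr (Cdiv z (RtoC 2)) (nu + 2 * INR k))).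

Definition Kq3_formula (q nu : R) (z : C) : C :=
  Cmult (RtoC (/ 2 * Rpower q (- nu ^ 2 + nu) * qGamma (q ^ 2) nu * qGamma (q ^ 2) (1 - nu)))
        (Cminus (Iq3 q (- nu) z) (Iq3 q nu z)).


(* Kq3 q nu z = K_nu^(3)((1-q^2) z; q^2): the formula for non-integer nu,
   and the (punctured) limit mu -> nu of the formula for integer nu. *)
Definition Kq3 (q nu : R) (z : C) : C :=
  if Req_EM_T nu (IZR (Int_part nu)) then
    (real (Lim (fun mu => Re (Kq3_formula q mu z)) nu),
     real (Lim (fun mu => Im (Kq3_formula q mu z)) nu))
  else Kq3_formula q nu z.

Definition qderiv (q : R) (f : C -> C) (z : C) : C :=
  Cdiv (Cminus (f z) (f (Cmult (RtoC q) z))) (Cmult (RtoC (1 - q)) z).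

(* Main.v *)
Require Import Defs.
From Stdlib Require Import Reals Lra Lia Psatz ZArith Classical.
From Coquelicot Require Import Coquelicot.
Open Scope R_scope.


Lemma pow_le1 x n : 0 <= x <= 1 -> x ^ n <= 1.
Proof. intros H. rewrite <- (pow1 n). apply pow_incr. lra. Qed.

Lemma qpoch_S a Q k : qpoch a Q (S k) = qpoch a Q k * (1 - a * Q ^ k).
Proof. reflexivity. Qed.

Lemma qpoch_S_left a Q k : qpoch a Q (S k) = (1 - a) * qpoch (a*Q) Q k.
Proof.
  induction k.
  - simpl. ring.
  - rewrite qpoch_S, IHk, qpoch_S. simpl. ring.
Qed.

Lemma qpoch_add a Q J M : qpoch a Q (J+M) = qpoch a Q J * qpoch (a*Q^J) Q M.
Proof.
  induction M.
  - rewrite Nat.add_0_r. simpl. ring.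
  - rewrite Nat.add_succ_r, !qpoch_S, IHM, pow_add. ring.
Qed.

Lemma real_Rbar_mult (c : R) (L : Rbar) : real (Rbar_mult c L) = c * real L.
Proof.
  destruct L as [l| |]; [simpl; ring| |];
  unfold Rbar_mult, Rbar_mult';
  destruct (Rle_dec 0 c) as [H|H]; try destruct (Rle_lt_or_eq_dec 0 c H); simpl; ring.
Qed.

Lemma P_fun a Q : qpoch_inf a Q = (1 - a) * qpoch_inf (a*Q) Q.
Proof.
  unfold qpoch_inf. rewrite <- Lim_seq_incr_1.
  rewrite (Lim_seq_ext _ (fun k => (1-a) * qpoch (a*Q) Q k)) by (intro; apply qpoch_S_left).
  rewrite Lim_seq_scal_l. apply real_Rbar_mult.
Qed.

Lemma pp_bounds b Q k : 0 < Q < 1 -> 0 <= b <= 1 ->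
  0 <= qpoch b Q k <= 1 /\ 1 - b * (1 - Q^k) / (1 - Q) <= qpoch b Q k.
Proof.
  intros HQ Hb. induction k.
  - simpl. split. lra. replace (b * (1-1)/(1-Q)) with 0 by (field; lra). lra.
  - rewrite qpoch_S. destruct IHk as [[H1 H2] H3].
    assert (0 <= Q^k <= 1) by (split; [apply pow_le; lra| apply pow_le1; lra]).
    assert (0 <= b * Q^k <= 1) by nra.
    split. split; nra.
    simpl. 
    assert (b * (1 - Q * Q ^ k) / (1 - Q) = b * (1 - Q ^ k) / (1 - Q) + b * Q^k) by (field; lra).
    rewrite H4. nra.
Qed.

Lemma pp_decr b Q k : 0 < Q < 1 -> 0 <= b <= 1 -> qpoch b Q (S k) <= qpoch b Q k.
Proof.
  intros HQ Hb. rewrite qpoch_S. destruct (pp_bounds b Q k HQ Hb) as [[H1 H2] _].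
  assert (0 <= Q^k <= 1) by (split; [apply pow_le; lra| apply pow_le1; lra]).
  assert (0 <= b * Q^k <= 1) by nra. nra.
Qed.

Lemma P_lim b Q : 0 < Q < 1 -> 0 <= b <= 1 ->
  is_lim_seq (qpoch b Q) (qpoch_inf b Q) /\
  1 - b / (1 - Q) <= qpoch_inf b Q <= 1.
Proof.
  intros HQ Hb.
  assert (Hf : ex_finite_lim_seq (qpoch b Q)).
  { apply ex_finite_lim_seq_decr with 0. intros; apply pp_decr; auto.
    intros; apply (pp_bounds b Q n HQ Hb). }
  assert (Hl := Lim_seq_correct' _ Hf).
  apply ex_finite_lim_seq_correct in Hf. destruct Hf as [_ Hfin].
  unfold qpoch_inf.
  assert (Hl' : is_lim_seq (qpoch b Q) (real (Lim_seq (qpoch b Q)))).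
  { exact Hl. }
  split. exact Hl'.
  split.
  - assert (H := is_lim_seq_le (fun _ => 1 - b/(1-Q)) (qpoch b Q) _ _
      (fun n => Rle_trans _ _ _ (ltac:(
         assert (0 <= Q^n) by (apply pow_le; lra);
         assert (b * (1 - Q^n)/(1-Q) <= b/(1-Q)) by
           (unfold Rdiv; apply Rmult_le_compat_r;
            [apply Rlt_le, Rinv_0_lt_compat; lra| nra]); lra)
         : 1 - b/(1-Q) <= 1 - b * (1 - Q^n)/(1-Q)) (proj2 (pp_bounds b Q n HQ Hb)))
      (is_lim_seq_const _) Hl'). simpl in H. exact H.
  - assert (H := is_lim_seq_le (qpoch b Q) (fun _ => 1) _ _
      (fun n => proj2 (proj1 (pp_bounds b Q n HQ Hb))) Hl' (is_lim_seq_const _)).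
    simpl in H. exact H.
Qed.

Fixpoint ecoef (Q : R) (k : nat) : R :=
  match k with O => 1 | S k' => ecoef Q k' * (- Q ^ k' / (1 - Q ^ (S k'))) end.

Lemma powS_lt1 Q k : 0 < Q < 1 -> 0 < Q ^ (S k) < 1.
Proof. intros. split. apply pow_lt; lra. apply pow_lt_1_compat; [lra|lia]. Qed.

Lemma ecoef_nz Q k : 0 < Q < 1 -> ecoef Q k <> 0.
Proof.
  intros HQ. induction k; simpl. lra.
  apply Rmult_integral_contrapositive_currified; auto.
  assert (0 < Q^k) by (apply pow_lt; lra). assert (H1 := powS_lt1 Q k HQ). simpl in H1.
  unfold Rdiv. apply Rmult_integral_contrapositive_currified. lra.
  apply Rinv_neq_0_compat. lra.
Qed.

Lemma ecoef_ratio Q : 0 < Q < 1 ->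
  is_lim_seq (fun n => Rabs (ecoef Q (S n) / ecoef Q n)) 0.
Proof.
  intros HQ.
  assert (H1 : is_lim_seq (fun n => Q ^ n) 0) by (apply is_lim_seq_geom; rewrite Rabs_pos_eq; lra).
  assert (H2 : is_lim_seq (fun n => 1 - Q * Q ^ n) (1 - Q * 0)).
  { apply is_lim_seq_minus'. apply is_lim_seq_const. apply is_lim_seq_mult'. apply is_lim_seq_const. exact H1. }
  assert (H3 := is_lim_seq_div' _ _ _ _ H1 H2 ltac:(lra)).
  replace (0 / (1 - Q * 0)) with 0 in H3 by (field; lra).
  eapply is_lim_seq_ext; [|exact H3].
  intros n. simpl. assert (H4 := ecoef_nz Q n HQ). assert (0 < Q^n) by (apply pow_lt; lra).
  assert (H5 := powS_lt1 Q n HQ). simpl in H5.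
  replace (ecoef Q n * (- Q ^ n / (1 - Q * Q ^ n)) / ecoef Q n) with (- (Q^n / (1 - Q * Q^n))) by (field; lra).
  rewrite Rabs_Ropp. rewrite Rabs_pos_eq. reflexivity.
  apply Rlt_le. apply Rdiv_lt_0_compat; lra.
Qed.

Lemma ecoef_radius Q : 0 < Q < 1 -> CV_radius (ecoef Q) = p_infty.
Proof. intros HQ. apply CV_radius_infinite_DAlembert. intros; apply ecoef_nz; auto. apply ecoef_ratio; auto. Qed.

Definition Ef (Q a : R) : R := PSeries (ecoef Q) a.

Lemma ecoef_abs_ex Q x : 0 < Q < 1 -> ex_series (fun n => Rabs (ecoef Q n * x ^ n)).
Proof. intros HQ. apply CV_disk_inside. rewrite ecoef_radius; simpl; auto. Qed.

Lemma ecoef_ex Q x : 0 < Q < 1 -> ex_series (fun n => ecoef Q n * x ^ n).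
Proof. intros HQ. apply ex_series_Rabs. apply ecoef_abs_ex; auto. Qed.

Lemma Ef_fun Q a : 0 < Q < 1 -> Ef Q a = (1 - a) * Ef Q (a * Q).
Proof.
  intros HQ. unfold Ef, PSeries.
  assert (Hm : Series (fun k => ecoef Q k * a ^ k) - Series (fun k => ecoef Q k * (a*Q) ^ k)
               = - a * Series (fun k => ecoef Q k * (a*Q) ^ k)).
  { rewrite <- Series_minus by (apply ecoef_ex; auto).
    assert (Hex : ex_series (fun k => ecoef Q k * a ^ k - ecoef Q k * (a*Q) ^ k)).
    { apply (ex_series_minus (V := R_NormedModule)); apply ecoef_ex; auto. }
    rewrite Series_incr_1 by exact Hex.
    rewrite <- Series_scal_l. simpl.
    match goal with |- ?a + _ = _ => replace a with 0 by ring end. rewrite Rplus_0_l.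
    apply Series_ext. intros n. simpl.
    assert (H5 := powS_lt1 Q n HQ). simpl in H5.
    rewrite Rpow_mult_distr. field. lra. }
  lra.
Qed.

Definition SE (Q : R) : R := Series (fun k => Rabs (ecoef Q (S k))).

Lemma SE_ex Q : 0 < Q < 1 -> ex_series (fun k => Rabs (ecoef Q (S k))).
Proof.
  intros HQ. assert (H := ecoef_abs_ex Q 1 HQ).
  apply (ex_series_incr_1 (V := R_NormedModule)) in H.
  eapply ex_series_ext; [|exact H]. intros n. simpl. rewrite pow1. f_equal. ring.
Qed.

Lemma Ef_near0 Q b : 0 < Q < 1 -> 0 <= b <= 1 -> Rabs (Ef Q b - 1) <= b * SE Q.
Proof.
  intros HQ Hb. unfold Ef, PSeries.
  rewrite Series_incr_1 by (apply ecoef_ex; auto). simpl.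
  rewrite (Series_ext _ (fun k => b * (ecoef Q (S k) * b ^ k))) by (intros; simpl; ring).
  rewrite Series_scal_l.
  replace (1 * 1 + b * Series (fun k => ecoef Q (S k) * b ^ k) - 1)
    with (b * Series (fun k => ecoef Q (S k) * b ^ k)) by ring.
  rewrite Rabs_mult, Rabs_pos_eq by lra.
  apply Rmult_le_compat_l. lra.
  assert (Hex : ex_series (fun k => Rabs (ecoef Q (S k) * b ^ k))).
  { apply (ex_series_le (V := R_CompleteNormedModule)) with (fun k => Rabs (ecoef Q (S k))).
    intros n. rewrite Rabs_Rabsolu. rewrite Rabs_mult. rewrite <- (Rmult_1_r (Rabs (ecoef Q (S n)))) at 2.
    apply Rmult_le_compat_l. apply Rabs_pos. rewrite Rabs_pos_eq. apply pow_le1; lra. apply pow_le; lra.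
    apply SE_ex; auto. }
  eapply Rle_trans. apply Series_Rabs. exact Hex.
  apply Series_le. intros n. split. apply Rabs_pos.
  rewrite Rabs_mult. rewrite <- (Rmult_1_r (Rabs (ecoef Q (S n)))) at 2.
  apply Rmult_le_compat_l. apply Rabs_pos. rewrite Rabs_pos_eq. apply pow_le1; lra. apply pow_le; lra.
  apply SE_ex; auto.
Qed.

Lemma Series_zero : Series (fun _:nat => 0) = 0.
Proof. rewrite (Series_ext _ (fun n => 0 * 1)) by (intros; ring). rewrite Series_scal_l. ring. Qed.

Lemma SE_nonneg Q : 0 < Q < 1 -> 0 <= SE Q.
Proof.
  intros HQ. unfold SE. rewrite <- Series_zero.
  apply Series_le. 2: apply SE_ex; auto. intros; split; [lra| apply Rabs_pos].
Qed.

Lemma zero_of_bound x K Q J : 0 < Q < 1 ->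
  (forall N, (J <= N)%nat -> Rabs x <= K * Q ^ N) -> x = 0.
Proof.
  intros HQ H. destruct (Req_dec x 0) as [|Hx]; auto. exfalso.
  assert (Hxp : 0 < Rabs x) by (apply Rabs_pos_lt; auto).
  assert (HK : 0 <= K).
  { specialize (H J (Nat.le_refl _)). assert (0 < Q^J) by (apply pow_lt; lra).
    destruct (Rle_lt_dec 0 K); auto. nra. }
  destruct (pow_lt_1_zero Q ltac:(rewrite Rabs_pos_eq; lra) (Rabs x / (K + 1)))
    as [N0 HN0].
  apply Rdiv_lt_0_compat; lra.
  specialize (HN0 (Nat.max J N0) ltac:(lia)).
  specialize (H (Nat.max J N0) ltac:(lia)).
  rewrite Rabs_pos_eq in HN0 by (apply pow_le; lra).
  assert (K * Q ^ Nat.max J N0 <= K * (Rabs x / (K+1))) by (apply Rmult_le_compat_l; lra).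
  assert (K * (Rabs x / (K+1)) < Rabs x).
  { apply (Rmult_lt_reg_r (K+1)). lra. field_simplify; try lra. }
  lra.
Qed.

Lemma qpoch_abs_le1 b Q k : 0 < Q < 1 -> 0 <= b <= 1 -> Rabs (qpoch b Q k) <= 1.
Proof.
  intros HQ Hb. destruct (pp_bounds b Q k HQ Hb) as [[H1 H2] _].
  rewrite Rabs_pos_eq; lra.
Qed.

Lemma PE Q a : 0 < Q < 1 -> 0 <= a -> qpoch_inf a Q = Ef Q a.
Proof.
  intros HQ Ha.
  set (D := fun b => qpoch_inf b Q - Ef Q b).
  assert (HD : forall b, D b = (1 - b) * D (b * Q)).
  { intros b. unfold D. rewrite P_fun at 1. rewrite (Ef_fun Q b HQ) at 1. ring. }
  assert (HDN : forall N b, D b = qpoch b Q N * D (b * Q ^ N)).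
  { induction N; intros b. simpl. rewrite Rmult_1_r. ring.
    rewrite HD, IHN, qpoch_S_left. simpl. rewrite Rmult_assoc. ring. }
  assert (Hsmall : forall b, 0 <= b <= 1 -> Rabs (D b) <= b * (/ (1 - Q) + SE Q)).
  { intros b Hb. unfold D. destruct (P_lim b Q HQ Hb) as [_ Hb2].
    assert (H3 := Ef_near0 Q b HQ Hb).
    replace (qpoch_inf b Q - Ef Q b) with ((qpoch_inf b Q - 1) - (Ef Q b - 1)) by ring.
    eapply Rle_trans. apply Rabs_triang. rewrite Rabs_Ropp.
    assert (Rabs (qpoch_inf b Q - 1) <= b / (1 - Q)).
    { rewrite Rabs_left1. lra. lra. }
    unfold Rdiv in *. lra. }
  destruct (pow_lt_1_zero Q ltac:(rewrite Rabs_pos_eq; lra) (/ (a + 1))) as [J HJ].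
  apply Rinv_0_lt_compat; lra.
  assert (HaJ : a * Q ^ J <= 1).
  { specialize (HJ J (Nat.le_refl _)). rewrite Rabs_pos_eq in HJ by (apply pow_le; lra).
    apply Rlt_le. apply (Rmult_lt_reg_r (/ (a+1))). apply Rinv_0_lt_compat; lra.
    rewrite Rmult_1_l. apply Rle_lt_trans with ((a+1) * Q^J * / (a+1)).
    apply Rmult_le_compat_r. apply Rlt_le, Rinv_0_lt_compat; lra.
    assert (0 <= Q^J) by (apply pow_le; lra). nra.
    replace ((a + 1) * Q ^ J * / (a + 1)) with (Q^J) by (field; lra). exact HJ. }
  assert (Hz : D a = 0).
  { apply (zero_of_bound _ (Rabs (qpoch a Q J) * (a * (/ (1 - Q) + SE Q))) Q J HQ).
    intros N HN.
    rewrite (HDN N a).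
    replace N with (J + (N - J))%nat by lia.
    rewrite qpoch_add. rewrite !Rabs_mult.
    assert (H1 : Rabs (qpoch (a * Q ^ J) Q (N - J)) <= 1).
    { apply qpoch_abs_le1; auto. split; auto. apply Rmult_le_pos; auto. apply pow_le; lra. }
    assert (Hb : 0 <= a * Q ^ (J + (N - J)) <= 1).
    { split. apply Rmult_le_pos; auto. apply pow_le; lra.
      rewrite pow_add. assert (0 <= Q^J) by (apply pow_le; lra).
      assert (Q^(N-J) <= 1) by (apply pow_le1; lra). assert (0 <= Q^(N-J)) by (apply pow_le; lra). nra. }
    assert (H2 := Hsmall _ Hb).
    assert (0 <= / (1 - Q) + SE Q) by (assert (0 < /(1-Q)) by (apply Rinv_0_lt_compat; lra); assert (H0 := SE_nonneg Q HQ); lra).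
    assert (0 <= Rabs (qpoch a Q J)) by apply Rabs_pos.
    assert (0 <= Rabs (qpoch (a * Q ^ J) Q (N - J))) by apply Rabs_pos.
    assert (0 <= Rabs (D (a * Q ^ (J + (N - J))))) by apply Rabs_pos.
    apply Rle_trans with (Rabs (qpoch a Q J) * 1 * Rabs (D (a * Q ^ (J + (N - J))))).
    apply Rmult_le_compat_r; auto. apply Rmult_le_compat_l; auto.
    rewrite Rmult_1_r. rewrite Rmult_assoc. apply Rmult_le_compat_l; auto.
    eapply Rle_trans. exact H2. right. ring. }
  unfold D in Hz. lra.
Qed.

Lemma qpoch_pos b Q k : 0 < Q < 1 -> 0 <= b < 1 -> 0 < qpoch b Q k.
Proof.
  intros HQ Hb. induction k. simpl; lra.
  rewrite qpoch_S. apply Rmult_lt_0_compat; auto.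
  assert (Q^k <= 1) by (apply pow_le1; lra). assert (0 <= Q^k) by (apply pow_le; lra). nra.
Qed.

Lemma qpoch_decr_n b Q m k : 0 < Q < 1 -> 0 <= b <= 1 -> qpoch b Q (m + k) <= qpoch b Q k.
Proof.
  intros HQ Hb. induction m. simpl; lra.
  simpl plus. eapply Rle_trans. apply pp_decr; auto. exact IHm.
Qed.

Lemma qpoch_lower Q : 0 < Q < 1 -> exists d, 0 < d /\ forall k, d <= qpoch Q Q k.
Proof.
  intros HQ.
  destruct (pow_lt_1_zero Q ltac:(rewrite Rabs_pos_eq; lra) ((1 - Q)/2)) as [N HN].
  lra.
  specialize (HN N (Nat.le_refl _)). rewrite Rabs_pos_eq in HN by (apply pow_le; lra).
  exists (qpoch Q Q N / 2). split. assert (H := qpoch_pos Q Q N HQ ltac:(lra)). lra.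
  intros k. eapply Rle_trans; [|apply (qpoch_decr_n Q Q N k HQ ltac:(lra))].
  rewrite qpoch_add.
  assert (Hb : 0 <= Q * Q^N <= 1).
  { assert (0 <= Q^N) by (apply pow_le; lra). split. nra. nra. }
  destruct (pp_bounds (Q * Q^N) Q k HQ Hb) as [_ H3].
  assert (H4 : 1 - Q * Q ^ N * (1 - Q ^ k) / (1 - Q) >= 1/2).
  { assert (0 <= Q^k <= 1) by (split; [apply pow_le; lra|apply pow_le1; lra]).
    assert (0 <= Q^N) by (apply pow_le; lra).
    assert (Q * Q ^ N * (1 - Q ^ k) <= (1-Q)/2) by nra.
    assert (Q * Q ^ N * (1 - Q ^ k) / (1 - Q) <= 1/2).
    { apply (Rmult_le_reg_r (1-Q)). lra. field_simplify; lra. }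
    lra. }
  assert (H5 := qpoch_pos Q Q N HQ ltac:(lra)).
  assert (H6 : qpoch (Q * Q ^ N) Q k >= 1/2) by lra.
  unfold Rdiv. rewrite Rmult_comm. 
  apply Rle_trans with (qpoch Q Q N * (1/2)). right; field.
  apply Rmult_le_compat_l; lra.
Qed.

Lemma A_pos Q : 0 < Q < 1 -> exists d, 0 < d /\ d <= qpoch_inf Q Q /\ forall k, d <= qpoch Q Q k.
Proof.
  intros HQ. destruct (qpoch_lower Q HQ) as [d [Hd Hk]]. exists d. split; auto. split; auto.
  destruct (P_lim Q Q HQ ltac:(lra)) as [Hl _].
  assert (H := is_lim_seq_le (fun _ => d) _ _ _ Hk (is_lim_seq_const d) Hl). simpl in H. exact H.
Qed.


Definition br (Q x : R) : R := (1 - Rpower Q x) / (1 - Q).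
Definition rg (Q x : R) : R := Ef Q (Rpower Q x) * Rpower (1 - Q) (x - 1) / qpoch_inf Q Q.
Definition Efd (Q a : R) : R := PSeries (PS_derive (ecoef Q)) a.

Lemma Rpower_pos a x : 0 < a -> 0 < Rpower a x.
Proof. intros. unfold Rpower. apply exp_pos. Qed.

Lemma inv_qGamma Q x : 0 < Q < 1 -> / qGamma Q x = rg Q x.
Proof.
  intros HQ. unfold qGamma, rg. unfold Rdiv.
  rewrite !Rinv_mult, Rinv_inv.
  rewrite (PE Q (Rpower Q x)) by (auto; apply Rlt_le, Rpower_pos; lra).
  replace (x - 1) with (- (1 - x)) by ring. rewrite Rpower_Ropp. ring.
Qed.

Lemma qGamma_rg Q x : 0 < Q < 1 -> qGamma Q x = / rg Q x.
Proof. intros HQ. rewrite <- inv_qGamma by auto. rewrite Rinv_inv. auto. Qed.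

Lemma A_nz Q : 0 < Q < 1 -> qpoch_inf Q Q <> 0.
Proof. intros HQ. destruct (A_pos Q HQ) as [d [Hd [H _]]]. lra. Qed.

Lemma rg_fun Q x : 0 < Q < 1 -> rg Q x = br Q x * rg Q (x + 1).
Proof.
  intros HQ. unfold rg, br.
  rewrite (Ef_fun Q (Rpower Q x) HQ).
  rewrite Rpower_plus, Rpower_1 by lra.
  replace (x + 1 - 1) with x by ring.
  assert (Hm : Rpower (1 - Q) (x - 1) = Rpower (1 - Q) x / (1 - Q)).
  { unfold Rpower. replace ((x - 1) * ln (1 - Q)) with (x * ln (1-Q) + - (1 * ln (1 - Q))) by ring.
    rewrite exp_plus, exp_Ropp. rewrite Rmult_1_l, exp_ln by lra. reflexivity. }
  rewrite Hm.
  assert (H := A_nz Q HQ). field. split; lra.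
Qed.

Lemma rg1 Q : 0 < Q < 1 -> rg Q 1 = 1.
Proof.
  intros HQ. unfold rg. rewrite Rpower_1 by lra. rewrite <- PE by lra.
  replace (1 - 1) with 0 by ring. rewrite Rpower_O by lra.
  assert (H := A_nz Q HQ). field. auto.
Qed.

Lemma br0 Q : 0 < Q < 1 -> br Q 0 = 0.
Proof. intros HQ. unfold br. rewrite Rpower_O by lra. unfold Rdiv. ring. Qed.

Lemma rg_negint Q m : 0 < Q < 1 -> rg Q (- INR m) = 0.
Proof.
  intros HQ. induction m.
  - simpl. rewrite Ropp_0. rewrite rg_fun, br0 by auto. ring.
  - rewrite rg_fun by auto. rewrite S_INR. replace (- (INR m + 1) + 1) with (- INR m) by ring.
    rewrite IHm. ring.
Qed.

Lemma rg_posint Q m : 0 < Q < 1 -> rg Q (INR m + 1) <> 0.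
Proof.
  intros HQ. induction m.
  - simpl. rewrite Rplus_0_l, rg1 by auto. lra.
  - intros H. apply IHm. rewrite rg_fun by auto. rewrite S_INR in H.
    replace (INR m + 1 + 1) with (INR m + 1 + 1) in * by ring. rewrite H. ring.
Qed.

Lemma Ef_derive Q a : 0 < Q < 1 -> is_derive (Ef Q) a (Efd Q a).
Proof.
  intros HQ. unfold Ef, Efd. apply is_derive_PSeries. rewrite ecoef_radius by auto. simpl; auto.
Qed.

Definition rgd (Q x : R) : R :=
  (Rpower Q x * ln Q * Efd Q (Rpower Q x) * Rpower (1 - Q) (x - 1)
   + Ef Q (Rpower Q x) * (Rpower (1 - Q) (x - 1) * ln (1 - Q))) / qpoch_inf Q Q.

Lemma rg_derive Q x : 0 < Q < 1 -> is_derive (rg Q) x (rgd Q x).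
Proof.
  intros HQ. unfold rg, rgd, Rpower. auto_derive.
  - eexists. apply Ef_derive; auto.
  - rewrite (is_derive_unique _ _ _ (Ef_derive Q _ HQ)).
    match goal with |- ?a = ?b => change (@eq R a b) end. unfold Rminus. field. apply A_nz; auto.
Qed.

Definition brd (Q x : R) : R := - (Rpower Q x * ln Q) / (1 - Q).

Lemma rgd_fun Q x : 0 < Q < 1 -> rgd Q x = brd Q x * rg Q (x + 1) + br Q x * rgd Q (x + 1).
Proof.
  intros HQ.
  assert (H2 : is_derive (fun y => br Q y * rg Q (y + 1)) x (brd Q x * rg Q (x + 1) + br Q x * rgd Q (x + 1))).
  { unfold br, brd, Rpower. auto_derive.
    - eexists. apply rg_derive; auto.
    - rewrite (is_derive_unique _ _ _ (rg_derive Q _ HQ)).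
      match goal with |- ?a = ?b => change (@eq R a b) end. field. lra. }
  assert (H3 : is_derive (rg Q) x (brd Q x * rg Q (x + 1) + br Q x * rgd Q (x + 1))).
  { eapply is_derive_ext; [|exact H2]. intros t. simpl. rewrite <- rg_fun; auto. }
  rewrite <- (is_derive_unique _ _ _ H3). rewrite (is_derive_unique _ _ _ (rg_derive Q x HQ)). auto.
Qed.

Lemma lnQ_neg Q : 0 < Q < 1 -> ln Q < 0.
Proof. intros. rewrite <- ln_1. apply ln_increasing; lra. Qed.

Lemma rgd_negint Q m : 0 < Q < 1 -> rgd Q (- INR m) <> 0.
Proof.
  intros HQ. induction m.
  - simpl. rewrite Ropp_0. rewrite rgd_fun by auto. rewrite br0 by auto.
    replace (0+1) with 1 by ring. rewrite rg1 by auto. unfold brd. rewrite Rpower_O by lra.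
    assert (H := lnQ_neg Q HQ). unfold Rdiv.
    intro H0. ring_simplify in H0. 
    assert (0 < / (1 - Q)) by (apply Rinv_0_lt_compat; lra). 
    assert (0 < ln Q * / (1 - Q) * -1 ) by nra. lra.
  - rewrite rgd_fun by auto. rewrite S_INR. replace (- (INR m + 1) + 1) with (- INR m) by ring.
    rewrite rg_negint by auto. rewrite Rmult_0_r, Rplus_0_l.
    apply Rmult_integral_contrapositive_currified; auto.
    unfold br. unfold Rdiv. apply Rmult_integral_contrapositive_currified.
    + unfold Rpower. assert (H := lnQ_neg Q HQ). assert (0 <= INR m) by apply pos_INR.
      assert (H2 : 0 < - (INR m + 1) * ln Q) by nra.
      assert (H1 := exp_ineq1 (- (INR m + 1) * ln Q) (Rgt_not_eq _ _ H2)). intro. lra.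
    + apply Rinv_neq_0_compat; lra.
Qed.

Lemma exp_le_mono x y : x <= y -> exp x <= exp y.
Proof. intros [H|H]. left; apply exp_increasing; auto. right; subst; auto. Qed.

Lemma ps_bound c a a1 : CV_radius c = p_infty -> 0 <= a <= a1 ->
  Rabs (PSeries c a) <= Series (fun k => Rabs (c k * a1 ^ k)).
Proof.
  intros Hc Ha. unfold PSeries.
  assert (Hex1 : ex_series (fun k => Rabs (c k * a1 ^ k))) by (apply CV_disk_inside; rewrite Hc; simpl; auto).
  eapply Rle_trans. apply Series_Rabs. apply CV_disk_inside; rewrite Hc; simpl; auto.
  apply Series_le; auto. intros n. split. apply Rabs_pos.
  rewrite !Rabs_mult. apply Rmult_le_compat_l. apply Rabs_pos.
  rewrite !Rabs_pos_eq by (apply pow_le; lra). apply pow_incr; lra.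
Qed.

Lemma Series_abs_nonneg (u : nat -> R) : ex_series (fun k => Rabs (u k)) -> 0 <= Series (fun k => Rabs (u k)).
Proof. intros H. rewrite <- Series_zero. apply Series_le; auto. intros; split; [lra|apply Rabs_pos]. Qed.

Lemma rg_bounds Q x0 : 0 < Q < 1 -> exists R0, 0 <= R0 /\
  forall x, x0 <= x -> Rabs (rg Q x) <= R0 /\ Rabs (rgd Q x) <= R0.
Proof.
  intros HQ.
  set (a1 := Rpower Q x0).
  set (S0 := Series (fun k => Rabs (ecoef Q k * a1 ^ k))).
  set (S1 := Series (fun k => Rabs (PS_derive (ecoef Q) k * a1 ^ k))).
  set (Rp0 := Rpower (1 - Q) (x0 - 1)).
  set (A := qpoch_inf Q Q).
  assert (HA : 0 < A) by (destruct (A_pos Q HQ) as [d [Hd [H _]]]; unfold A; lra).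
  assert (Ha1 : 0 < a1) by (apply Rpower_pos; lra).
  assert (HS0 : 0 <= S0) by (apply Series_abs_nonneg; apply CV_disk_inside; rewrite ecoef_radius; simpl; auto).
  assert (HS1 : 0 <= S1) by (apply Series_abs_nonneg; apply CV_disk_inside; rewrite CV_radius_derive, ecoef_radius; simpl; auto).
  assert (HRp0 : 0 < Rp0) by (apply Rpower_pos; lra).
  assert (HlQ := lnQ_neg Q HQ).
  assert (HlQ' : ln (1 - Q) < 0) by (apply lnQ_neg; lra).
  exists ((S0 + a1 * Rabs (ln Q) * S1 + S0 * Rabs (ln (1 - Q))) * Rp0 / A).
  split. apply Rmult_le_pos. apply Rmult_le_pos.
  assert (0 <= a1 * Rabs (ln Q) * S1) by (apply Rmult_le_pos; [apply Rmult_le_pos; [lra|apply Rabs_pos]|lra]).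
  assert (0 <= S0 * Rabs (ln (1 - Q))) by (apply Rmult_le_pos; [lra|apply Rabs_pos]). lra. lra.
  left; apply Rinv_0_lt_compat; lra.
  intros x Hx.
  assert (Hax : 0 < Rpower Q x <= a1).
  { split. apply Rpower_pos; lra. unfold a1, Rpower. apply exp_le_mono. nra. }
  assert (HRp : 0 < Rpower (1 - Q) (x - 1) <= Rp0).
  { split. apply Rpower_pos; lra. unfold Rp0, Rpower. apply exp_le_mono. nra. }
  assert (HE0 : Rabs (Ef Q (Rpower Q x)) <= S0).
  { unfold Ef, S0. apply ps_bound. apply ecoef_radius; auto. lra. }
  assert (HE1 : Rabs (Efd Q (Rpower Q x)) <= S1).
  { unfold Efd, S1. apply ps_bound. rewrite CV_radius_derive. apply ecoef_radius; auto. lra. }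
  assert (0 <= Rabs (ln Q)) by apply Rabs_pos. assert (0 <= Rabs (ln (1-Q))) by apply Rabs_pos.
  split.
  - unfold rg. fold A. unfold Rdiv. rewrite !Rabs_mult. rewrite (Rabs_pos_eq (/ A)) by (left; apply Rinv_0_lt_compat; lra).
    rewrite (Rabs_pos_eq (Rpower _ _)) by lra.
    apply Rmult_le_compat_r. left; apply Rinv_0_lt_compat; lra.
    apply Rle_trans with (S0 * Rp0). apply Rmult_le_compat; try lra. apply Rabs_pos.
    apply Rmult_le_compat_r; try lra.
    assert (0 <= a1 * Rabs (ln Q) * S1) by (apply Rmult_le_pos; [apply Rmult_le_pos; [lra|apply Rabs_pos]|lra]).
    assert (0 <= S0 * Rabs (ln (1 - Q))) by (apply Rmult_le_pos; [lra|apply Rabs_pos]). lra.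
  - unfold rgd. fold A. unfold Rdiv. rewrite Rabs_mult. rewrite (Rabs_pos_eq (/ A)) by (left; apply Rinv_0_lt_compat; lra).
    apply Rmult_le_compat_r. left; apply Rinv_0_lt_compat; lra.
    eapply Rle_trans. apply Rabs_triang. rewrite !Rabs_mult.
    rewrite (Rabs_pos_eq (Rpower Q x)) by lra. rewrite (Rabs_pos_eq (Rpower (1-Q) (x-1))) by lra.
    assert (0 <= Rabs (Efd Q (Rpower Q x))) by apply Rabs_pos.
    assert (0 <= Rabs (Ef Q (Rpower Q x))) by apply Rabs_pos.
    assert (Rpower Q x * Rabs (ln Q) * Rabs (Efd Q (Rpower Q x)) * Rpower (1 - Q) (x - 1) <= a1 * Rabs (ln Q) * S1 * Rp0).
    { apply Rmult_le_compat; try lra. repeat apply Rmult_le_pos; lra.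
      apply Rmult_le_compat; try lra. apply Rmult_le_pos; lra. apply Rmult_le_compat; lra. }
    assert (Rabs (Ef Q (Rpower Q x)) * (Rpower (1 - Q) (x - 1) * Rabs (ln (1 - Q))) <= S0 * (Rp0 * Rabs (ln (1-Q)))).
    { apply Rmult_le_compat; try lra. apply Rmult_le_pos; lra. apply Rmult_le_compat_r; lra. }
    assert (S0 * Rp0 >= 0) by nra.
    nra.
Qed.


Lemma exR_scal (c : R) (a : nat -> R) : ex_series a -> ex_series (fun n => c * a n).
Proof. intros H. apply (ex_series_scal_l (V := R_NormedModule) c) in H. exact H. Qed.

Lemma exR_plus (a b : nat -> R) : ex_series a -> ex_series b -> ex_series (fun n => a n + b n).
Proof. intros H1 H2. exact (ex_series_plus (V := R_NormedModule) _ _ H1 H2). Qed.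

Lemma exR_minus (a b : nat -> R) : ex_series a -> ex_series b -> ex_series (fun n => a n - b n).
Proof. intros H1 H2. exact (ex_series_minus (V := R_NormedModule) _ _ H1 H2). Qed.

Lemma exR_shift (a : nat -> R) : ex_series a -> ex_series (fun n => a (S n)).
Proof. intros H. exact (proj1 (ex_series_incr_1 (V := R_NormedModule) a) H). Qed.

Lemma exR_unshift (a : nat -> R) : ex_series (fun n => a (S n)) -> ex_series a.
Proof. intros H. exact (proj2 (ex_series_incr_1 (V := R_NormedModule) a) H). Qed.

Definition cex (u : nat -> C) : Prop :=
  ex_series (fun k => Re (u k)) /\ ex_series (fun k => Im (u k)).

Lemma C_ext (a b : C) : Re a = Re b -> Im a = Im b -> a = b.
Proof. destruct a, b. unfold Re, Im. simpl. intros; subst; auto. Qed.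

Lemma CSeries_ext u v : (forall k, u k = v k) -> CSeries u = CSeries v.
Proof. intros H. unfold CSeries. f_equal; apply Series_ext; intros; rewrite H; auto. Qed.

Lemma cex_ext u v : (forall k, u k = v k) -> cex u -> cex v.
Proof.
  intros H [H1 H2]. split.
  - eapply ex_series_ext; [|exact H1]. intros; simpl; rewrite H; auto.
  - eapply ex_series_ext; [|exact H2]. intros; simpl; rewrite H; auto.
Qed.

Lemma cex_scal c u : cex u -> cex (fun k => Cmult c (u k)).
Proof.
  intros [H1 H2]. split; simpl.
  - apply exR_minus; apply exR_scal; auto.
  - apply exR_plus; apply exR_scal; auto.
Qed.

Lemma CSeries_scal c u : cex u -> CSeries (fun k => Cmult c (u k)) = Cmult c (CSeries u).
Proof.
  intros [H1 H2]. unfold CSeries. apply C_ext; unfold Re, Im; simpl.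
  - rewrite Series_minus by (apply exR_scal; auto). rewrite !Series_scal_l. auto.
  - rewrite Series_plus by (apply exR_scal; auto). rewrite !Series_scal_l. auto.
Qed.

Lemma cex_minus u v : cex u -> cex v -> cex (fun k => Cminus (u k) (v k)).
Proof. intros [H1 H2] [H3 H4]. split; simpl; [apply (exR_minus _ _ H1 H3) | apply (exR_minus _ _ H2 H4)]. Qed.

Lemma CSeries_minus u v : cex u -> cex v ->
  CSeries (fun k => Cminus (u k) (v k)) = Cminus (CSeries u) (CSeries v).
Proof.
  intros [H1 H2] [H3 H4]. unfold CSeries. apply C_ext; unfold Re, Im in *; simpl.
  - rewrite (Series_ext _ (fun k => fst (u k) - fst (v k))) by (intros; simpl; ring).
    rewrite Series_minus by auto. ring.
  - rewrite (Series_ext _ (fun k => snd (u k) - snd (v k))) by (intros; simpl; ring).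
    rewrite Series_minus by auto. ring.
Qed.

Lemma cex_shift u : cex u -> cex (fun k => u (S k)).
Proof. intros [H1 H2]. split; [apply (exR_shift (fun k => Re (u k))) | apply (exR_shift (fun k => Im (u k)))]; auto. Qed.

Lemma cex_unshift u : cex (fun k => u (S k)) -> cex u.
Proof. intros [H1 H2]. split; [apply (exR_unshift (fun k => Re (u k))) | apply (exR_unshift (fun k => Im (u k)))]; auto. Qed.

Lemma CSeries_shift u : cex u -> CSeries u = Cplus (u 0%nat) (CSeries (fun k => u (S k))).
Proof.
  intros [H1 H2]. unfold CSeries. apply C_ext; unfold Re, Im; simpl.
  - rewrite Series_incr_1 by auto. auto.
  - rewrite Series_incr_1 by auto. auto.
Qed.

Lemma slit_pos z : slit_plane z -> 0 < Cmod z + Re z /\ 0 < Cmod z.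
Proof.
  intros Hz. unfold slit_plane in Hz. destruct z as [x y]. unfold Cmod, Re, Im in *; cbn [fst snd] in *.
  destruct (Req_dec y 0) as [Hy|Hy].
  - subst. assert (x > 0) by (destruct (Rle_lt_dec x 0); [exfalso; apply Hz; auto| lra]).
    replace (x ^ 2 + 0 ^ 2) with (Rsqr x) by (unfold Rsqr; ring). rewrite sqrt_Rsqr_abs, Rabs_pos_eq by lra. lra.
  - assert (H1 : sqrt (Rsqr x) < sqrt (x ^ 2 + y ^ 2)).
    { apply sqrt_lt_1. apply Rle_0_sqr. nra. unfold Rsqr. assert (0 < y * y) by (apply Rsqr_pos_lt; auto). nra. }
    rewrite sqrt_Rsqr_abs in H1. split.
    + destruct (Rle_lt_dec 0 x). rewrite Rabs_pos_eq in H1; lra. rewrite Rabs_left in H1; lra.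
    + assert (0 <= Rabs x) by apply Rabs_pos. lra.
Qed.

Lemma slit_nz z : slit_plane z -> z <> 0%C.
Proof. intros Hz H. destruct (slit_pos z Hz) as [_ H1]. rewrite H, Cmod_0 in H1. lra. Qed.

Lemma cos_sin_2atan t : cos (2 * atan t) = (1 - t^2) / (1 + t^2) /\ sin (2 * atan t) = 2 * t / (1 + t^2).
Proof.
  rewrite cos_2a_cos, sin_2a, cos_atan, sin_atan.
  assert (H0 : 0 < 1 + t²) by (assert (0 <= t²) by apply Rle_0_sqr; lra).
  assert (Hs : sqrt (1 + t²) * sqrt (1 + t²) = 1 + t²) by (apply sqrt_sqrt; lra).
  assert (Hp : 0 < sqrt (1 + t²)) by (apply sqrt_lt_R0; lra).
  unfold Rsqr in *. 
  assert (Hs2 : sqrt (1 + t * t) ^ 2 = 1 + t * t) by (simpl; rewrite Rmult_1_r; exact Hs).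
  split.
  - replace (2 * (1 / sqrt (1 + t * t)) * (1 / sqrt (1 + t * t)) - 1) with (2 / (sqrt (1 + t * t) * sqrt (1 + t * t)) - 1) by (field; lra).
    rewrite Hs. field. lra.
  - replace (2 * (t / sqrt (1 + t * t)) * (1 / sqrt (1 + t * t))) with (2 * t / (sqrt (1 + t * t) * sqrt (1 + t * t))) by (field; lra).
    rewrite Hs. field. lra.
Qed.

Lemma alg_arg r x y : r * r = x * x + y * y -> 0 < r + x -> 0 < r ->
  r * ((1 - (y / (r + x)) ^ 2) / (1 + (y / (r + x)) ^ 2)) = x /\
  r * (2 * (y / (r + x)) / (1 + (y / (r + x)) ^ 2)) = y.
Proof.
  intros H1 H2 H3. set (s := r + x) in *.
  replace ((y / s) ^ 2) with (y ^ 2 / s ^ 2) by (field; lra).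
  assert (Hy : y ^ 2 = 2 * r * s - s ^ 2) by (unfold s in *; nra).
  rewrite Hy. replace x with (s - r) by (unfold s; ring).
  split; field; repeat split; intro; nra.
Qed.

Lemma Carg_cos_sin z : slit_plane z ->
  Cmod z * cos (Carg z) = Re z /\ Cmod z * sin (Carg z) = Im z.
Proof.
  intros Hz. destruct (slit_pos z Hz) as [Hs Hr].
  unfold Carg. destruct (cos_sin_2atan (Im z / (Cmod z + Re z))) as [Hc Hsn].
  rewrite Hc, Hsn.
  assert (Hr2 : Cmod z * Cmod z = Re z * Re z + Im z * Im z).
  { unfold Cmod. rewrite sqrt_sqrt. unfold Re, Im. ring. apply Rplus_le_le_0_compat; apply pow2_ge_0. }
  apply alg_arg; auto.
Qed.

Lemma Cpow_succ w a : slit_plane w -> Cpow_pr w (a + 1) = Cmult w (Cpow_pr w a).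
Proof.
  intros Hw. destruct (Carg_cos_sin w Hw) as [Hc Hs]. destruct (slit_pos w Hw) as [_ Hr].
  unfold Cpow_pr. rewrite Rpower_plus, Rpower_1 by lra.
  replace ((a + 1) * Carg w) with (a * Carg w + Carg w) by ring.
  rewrite cos_plus, sin_plus. apply C_ext; unfold Re, Im in *; simpl.
  - rewrite <- Hc, <- Hs. ring.
  - rewrite <- Hc, <- Hs. ring.
Qed.

Lemma Cpow_scal r w a : 0 < r -> slit_plane w ->
  Cpow_pr (Cmult (RtoC r) w) a = Cmult (RtoC (Rpower r a)) (Cpow_pr w a).
Proof.
  intros Hr0 Hw. destruct (slit_pos w Hw) as [_ Hr].
  assert (Hm : Cmod (Cmult (RtoC r) w) = r * Cmod w).
  { rewrite Cmod_mult, Cmod_R, Rabs_pos_eq; lra. }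
  assert (Ha : Carg (Cmult (RtoC r) w) = Carg w).
  { unfold Carg. rewrite Hm. f_equal. f_equal. destruct w as [x y]. unfold Re, Im; simpl.
    replace (r * y + 0 * x) with (r * y) by ring.
    replace (r * Cmod (x, y) + (r * x - 0 * y)) with (r * (Cmod (x, y) + x)) by ring.
    unfold Rdiv. rewrite Rinv_mult.
    replace (r * y * (/ r * / (Cmod (x, y) + x))) with ((r * / r) * (y * / (Cmod (x, y) + x))) by ring.
    rewrite Rinv_r by lra. ring. }
  unfold Cpow_pr. rewrite Hm, Ha. rewrite <- Rpower_mult_distr by lra.
  apply C_ext; unfold Re, Im; simpl; ring.
Qed.

Lemma slit_scal r w : 0 < r -> slit_plane w -> slit_plane (Cmult (RtoC r) w).
Proof.
  intros Hr Hw. unfold slit_plane in *. destruct w as [x y]. unfold Re, Im in *; simpl in *.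
  intros [H1 H2]. apply Hw. split; nra.
Qed.

Lemma Cdiv2 w : Cdiv w (RtoC 2) = Cmult (RtoC (/ 2)) w.
Proof. apply C_ext; unfold Re, Im, Cdiv, Cinv, Cmult; simpl; field. Qed.


Lemma exR_le (a b : nat -> R) : (forall n, Rabs (a n) <= b n) -> ex_series b -> ex_series a.
Proof. intros H Hb. apply (ex_series_le (V := R_CompleteNormedModule) a b); auto. Qed.

Lemma exR_tail (a : nat -> R) K : ex_series a -> ex_series (fun k => a (K + k)%nat).
Proof. intros H. exact (proj1 (ex_series_incr_n (V := R_NormedModule) a K) H). Qed.

Lemma lim_sum_f (u : nat -> nat -> R) (v : nat -> R) n :
  (forall k, is_lim_seq (fun j => u j k) (v k)) ->
  is_lim_seq (fun j => sum_f_R0 (u j) n) (sum_f_R0 v n).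
Proof.
  intros H. induction n; simpl. apply H.
  apply (is_lim_seq_plus' _ _ _ _ IHn (H (S n))).
Qed.

Lemma Series_zero' : Series (fun _:nat => 0) = 0.
Proof. rewrite (Series_ext _ (fun n => 0 * 1)) by (intros; ring). rewrite Series_scal_l. ring. Qed.

Lemma tannery (d : nat -> nat -> R) (l M : nat -> R) (N : nat) :
  (forall k, is_lim_seq (fun j => d j k) (l k)) ->
  (forall j k, (N <= j)%nat -> Rabs (d j k) <= M k) ->
  ex_series M ->
  is_lim_seq (fun j => Series (d j)) (Series l).
Proof.
  intros Hlim Hb HM.
  assert (Hl : forall k, Rabs (l k) <= M k).
  { intros k. assert (H := is_lim_seq_abs _ _ (Hlim k)). simpl in H.
    assert (H2 := is_lim_seq_le_loc (fun j => Rabs (d j k)) (fun _ => M k) _ _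
       (ltac:(exists N; intros; apply Hb; auto)) H (is_lim_seq_const _)). simpl in H2. exact H2. }
  assert (Hexl : ex_series l) by (apply (exR_le _ M); auto).
  apply is_lim_seq_Reals. intros eps Heps.
  assert (HMs := Series_correct _ HM). apply is_series_Reals in HMs.
  destruct (HMs (eps / 8) ltac:(lra)) as [K0 HK0].
  specialize (HK0 K0 (Nat.le_refl _)). unfold Rdist in HK0.
  set (K := S K0).
  assert (HT : Series M = sum_f_R0 M K0 + Series (fun k => M (K + k)%nat)).
  { rewrite (Series_incr_n M K) by (auto; unfold K; lia). unfold K. simpl. auto. }
  assert (HTb : Rabs (Series (fun k => M (K + k)%nat)) < eps / 8).
  { replace (Series (fun k => M (K + k)%nat)) with (- (sum_f_R0 M K0 - Series M)) by lra.
    rewrite Rabs_Ropp. auto. }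
  assert (HF := lim_sum_f (fun j k => d j k - l k) (fun k => 0) K0
                 (fun k => ltac:(
                    replace 0 with (l k - l k) by ring;
                    exact (is_lim_seq_minus' _ _ _ _ (Hlim k) (is_lim_seq_const (l k)))))).
  apply is_lim_seq_Reals in HF.
  destruct (HF (eps / 2) ltac:(lra)) as [J0 HJ0].
  exists (Nat.max N J0). intros j Hj.
  specialize (HJ0 j ltac:(lia)). unfold Rdist in *.
  assert (Hs0 : sum_f_R0 (fun _ : nat => 0) K0 = 0).
  { clear. induction K0; simpl; auto. rewrite IHK0; ring. }
  rewrite Hs0, Rminus_0_r in HJ0.
  assert (Hexd : ex_series (d j)) by (apply (exR_le _ M); auto; intros; apply Hb; lia).
  assert (Hexdl : ex_series (fun k => d j k - l k)) by (apply (ex_series_minus (V := R_NormedModule)); auto).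
  rewrite <- Series_minus by auto.
  rewrite (Series_incr_n _ K) by (auto; unfold K; lia).
  replace (Init.Nat.pred K) with K0 by (unfold K; auto).
  assert (Hexm : ex_series (fun k => M (K + k)%nat)) by (apply exR_tail; auto).
  assert (Htail : Rabs (Series (fun k => d j (K + k)%nat - l (K + k)%nat)) <= 2 * Series (fun k => M (K + k)%nat)).
  { rewrite <- Series_scal_l.
    assert (Hx : ex_series (fun k => Rabs (d j (K + k)%nat - l (K + k)%nat))).
    { apply (exR_le _ (fun k => 2 * M (K + k)%nat)).
      intros n. rewrite Rabs_Rabsolu. eapply Rle_trans. apply Rabs_triang. rewrite Rabs_Ropp.
      assert (Rabs (d j (K + n)%nat) <= M (K + n)%nat) by (apply Hb; lia). specialize (Hl (K + n)%nat). lra.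
      apply (ex_series_scal_l (V := R_NormedModule) 2) in Hexm. exact Hexm. }
    eapply Rle_trans. apply Series_Rabs. exact Hx.
    apply Series_le. intros n. split. apply Rabs_pos.
    eapply Rle_trans. apply Rabs_triang. rewrite Rabs_Ropp.
    assert (Rabs (d j (K + n)%nat) <= M (K + n)%nat) by (apply Hb; lia). specialize (Hl (K + n)%nat). lra.
    apply (ex_series_scal_l (V := R_NormedModule) 2) in Hexm. exact Hexm. }
  replace (sum_f_R0 (fun k => d j k - l k) K0 + Series (fun k => d j (K + k)%nat - l (K + k)%nat) - 0)
    with (sum_f_R0 (fun k => d j k - l k) K0 + Series (fun k => d j (K + k)%nat - l (K + k)%nat)) by ring.
  eapply Rle_lt_trans. apply Rabs_triang.
  assert (Series (fun k => M (K + k)%nat) <= Rabs (Series (fun k => M (K + k)%nat))) by apply RRle_abs.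
  lra.
Qed.

Lemma deriv_seq f x l (e : nat -> R) : is_derive f x l -> is_lim_seq e 0 -> (forall j, e j <> 0) ->
  is_lim_seq (fun j => (f (x + e j) - f x) / e j) l.
Proof.
  intros H He Hn. apply is_derive_Reals in H. apply is_lim_seq_Reals in He. apply is_lim_seq_Reals.
  intros eps Heps. destruct (H eps Heps) as [d Hd]. destruct (He d (cond_pos d)) as [N HN].
  exists N. intros n Hn'. unfold Rdist. apply Hd; auto. specialize (HN n Hn'). unfold Rdist in HN.
  rewrite Rminus_0_r in HN. auto.
Qed.

Lemma mvt_bound f fd a M h :
  (forall m, a - 1 <= m <= a + 1 -> is_derive f m (fd m)) ->
  (forall m, a - 1 <= m <= a + 1 -> Rabs (fd m) <= M) ->
  Rabs h <= 1 -> Rabs (f (a + h) - f a) <= M * Rabs h.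
Proof.
  intros Hd Hb Hh.
  assert (Hin : forall m, Rmin a (a + h) <= m <= Rmax a (a + h) -> a - 1 <= m <= a + 1).
  { intros m Hm. unfold Rmin, Rmax in Hm. destruct (Rle_dec a (a + h));
    apply Rabs_le_between in Hh; lra. }
  destruct (MVT_gen f a (a + h) fd) as [c [Hc Heq]].
  - intros m Hm. apply Hd, Hin. lra.
  - intros m Hm. apply continuity_pt_filterlim. apply (ex_derive_continuous (V := R_NormedModule)).
    eexists. apply Hd. apply Hin. auto.
  - rewrite Heq. replace (a + h - a) with h by ring. rewrite Rabs_mult.
    apply Rmult_le_compat_r. apply Rabs_pos. apply Hb, Hin. auto.
Qed.

Lemma series_diff (f fd : nat -> R -> R) (M : nat -> R) (m0 : R) :
  (forall k m, m0 - 1 <= m <= m0 + 1 -> is_derive (f k) m (fd k m)) ->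
  (forall k m, m0 - 1 <= m <= m0 + 1 -> Rabs (f k m) <= M k /\ Rabs (fd k m) <= M k) ->
  ex_series M ->
  forall e : nat -> R, is_lim_seq e 0 -> (forall j, e j <> 0) ->
  is_lim_seq (fun j => (Series (fun k => f k (m0 + e j)) - Series (fun k => f k m0)) / e j)
             (Series (fun k => fd k m0)).
Proof.
  intros Hd Hb HM e He Hn.
  assert (He' := He). apply is_lim_seq_Reals in He'. destruct (He' 1 Rlt_0_1) as [N HN].
  assert (HeN : forall j, (j >= N)%nat -> Rabs (e j) <= 1).
  { intros j Hj. specialize (HN j Hj). unfold Rdist in HN. rewrite Rminus_0_r in HN. lra. }
  apply is_lim_seq_ext_loc with (fun j => Series (fun k => (f k (m0 + e j) - f k m0) / e j)).
  - exists N. intros j Hj. specialize (HeN j Hj).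
    unfold Rdiv. rewrite Series_scal_r. rewrite Series_minus. auto.
    + apply (exR_le _ M); auto. intros k. apply Hb. apply Rabs_le_between in HeN. lra.
    + apply (exR_le _ M); auto. intros k. apply Hb. lra.
  - apply (tannery _ _ M N); auto.
    + intros k. apply deriv_seq; auto. apply Hd. lra.
    + intros j k Hj. specialize (HeN j Hj). specialize (Hn j).
      assert (H := mvt_bound (f k) (fd k) m0 (M k) (e j) (Hd k) (fun m Hm => proj2 (Hb k m Hm)) HeN).
      unfold Rdiv. rewrite Rabs_mult, Rabs_inv.
      assert (0 < Rabs (e j)) by (apply Rabs_pos_lt; auto).
      apply (Rmult_le_reg_r (Rabs (e j))); auto.
      rewrite Rmult_assoc, Rinv_l by lra. lra.
Qed.


Definition coefI (q mu : R) (k : nat) : R :=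
  Rpower q (INR k * (mu + INR k)) * (1 - q ^ 2) ^ k
  / (qpoch (q ^ 2) (q ^ 2) k * qGamma (q ^ 2) (mu + INR k + 1)).

Definition tI (q mu : R) (w : C) (k : nat) : C :=
  Cmult (RtoC (coefI q mu k)) (Cpow_pr (Cdiv w (RtoC 2)) (mu + 2 * INR k)).

Lemma Iq3_tI q mu w : Iq3 q mu w = CSeries (tI q mu w).
Proof. reflexivity. Qed.

Definition KK (q : R) (k : nat) : R := (1 - q ^ 2) ^ k / qpoch (q ^ 2) (q ^ 2) k.

Lemma Q_bounds q : 0 < q < 1 -> 0 < q ^ 2 < 1.
Proof. intros. split; nra. Qed.

Lemma coefI_rg q mu k : 0 < q < 1 ->
  coefI q mu k = Rpower q (INR k * (mu + INR k)) * KK q k * rg (q ^ 2) (mu + INR k + 1).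
Proof.
  intros Hq. unfold coefI, KK. rewrite qGamma_rg by (apply Q_bounds; auto).
  unfold Rdiv. rewrite Rinv_mult, Rinv_inv. ring.
Qed.

Definition trig (b : bool) (x : R) : R := if b then cos x else sin x.
Definition trigd (b : bool) (x : R) : R := if b then - sin x else cos x.

Definition rho (w : C) : R := Cmod (Cdiv w (RtoC 2)).
Definition th (w : C) : R := Carg (Cdiv w (RtoC 2)).

Definition fT (b : bool) (q : R) (w : C) (k : nat) (mu : R) : R :=
  KK q k * rg (q ^ 2) (mu + INR k + 1) *
  (exp (INR k * (mu + INR k) * ln q + (mu + 2 * INR k) * ln (rho w)) *
   trig b ((mu + 2 * INR k) * th w)).

Definition fTd (b : bool) (q : R) (w : C) (k : nat) (mu : R) : R :=
  KK q k * (rgd (q ^ 2) (mu + INR k + 1) *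
   (exp (INR k * (mu + INR k) * ln q + (mu + 2 * INR k) * ln (rho w)) *
    trig b ((mu + 2 * INR k) * th w))
  + rg (q ^ 2) (mu + INR k + 1) *
   (exp (INR k * (mu + INR k) * ln q + (mu + 2 * INR k) * ln (rho w)) *
    ((INR k * ln q + ln (rho w)) * trig b ((mu + 2 * INR k) * th w)
     + th w * trigd b ((mu + 2 * INR k) * th w)))).

Lemma tI_parts q mu w k : 0 < q < 1 ->
  Re (tI q mu w k) = fT true q w k mu /\ Im (tI q mu w k) = fT false q w k mu.
Proof.
  intros Hq. unfold tI, fT, Cpow_pr, rho, th, trig. rewrite coefI_rg by auto.
  unfold Rpower. rewrite exp_plus. unfold Re, Im, Cmult, RtoC. cbn [fst snd]. set (E1 := exp (INR k * (mu + INR k) * ln q)). set (E2 := exp ((mu + 2 * INR k) * ln (Cmod (Cdiv w (2,0))))). split; match goal with |- ?a = ?b => change (@eq R a b) end; ring.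
Qed.

Lemma fT_derive b q w k mu : 0 < q < 1 -> is_derive (fT b q w k) mu (fTd b q w k mu).
Proof.
  intros Hq. assert (HQ := Q_bounds q Hq).
  unfold fT, fTd. remember (q ^ 2) as Q.
  destruct b; unfold trig, trigd; auto_derive;
  try (eexists; apply rg_derive; auto);
  rewrite (is_derive_unique _ _ _ (rg_derive _ _ HQ));
  match goal with |- ?a = ?b => change (@eq R a b) end; ring.
Qed.

Lemma trig_le b x : Rabs (trig b x) <= 1 /\ Rabs (trigd b x) <= 1.
Proof.
  destruct b; unfold trig, trigd; split; try rewrite Rabs_Ropp; apply Rabs_le;
  first [apply COS_bound | apply SIN_bound].
Qed.

Lemma exp_Lb_step (lq lr m0 : R) (q : R) (n : nat) : 0 < q ->
  lq = ln q ->
  exp (INR (S n) * (m0 - 1 + INR (S n)) * lq + (m0 + 2 * INR (S n)) * lr + Rabs lr)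
  = exp (INR n * (m0 - 1 + INR n) * lq + (m0 + 2 * INR n) * lr + Rabs lr)
    * (exp (m0 * lq + 2 * lr) * (q ^ 2) ^ n).
Proof.
  intros Hq Hlq.
  assert (Hp : (q ^ 2) ^ n = exp (INR n * (2 * lq))).
  { rewrite <- Rpower_pow by (apply pow_lt; lra). unfold Rpower. f_equal.
    rewrite ln_pow by lra. rewrite Hlq. simpl. ring. }
  rewrite Hp, <- !exp_plus. f_equal. rewrite S_INR. ring.
Qed.

Lemma fT_bounds q w m0 : 0 < q < 1 -> exists M : nat -> R, ex_series M /\
  forall b k m, m0 - 1 <= m <= m0 + 1 ->
    Rabs (fT b q w k m) <= M k /\ Rabs (fTd b q w k m) <= M k.
Proof.
  intros Hq. assert (HQ := Q_bounds q Hq).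
  destruct (A_pos (q ^ 2) HQ) as [d [Hd [_ Hdk]]].
  destruct (rg_bounds (q ^ 2) m0 HQ) as [R0 [HR0 HRb]].
  set (lq := ln q). set (lr := ln (rho w)). set (t := th w).
  assert (Hlq : lq < 0) by (apply lnQ_neg; auto).
  set (C := R0 / d * (1 + Rabs lq + Rabs lr + Rabs t) + 1).
  set (Lb := fun k => INR k * (m0 - 1 + INR k) * lq + (m0 + 2 * INR k) * lr + Rabs lr).
  assert (Habs : 0 <= Rabs lq /\ 0 <= Rabs lr /\ 0 <= Rabs t) by (repeat split; apply Rabs_pos).
  assert (HRd : 0 <= R0 / d) by (apply Rmult_le_pos; [lra| left; apply Rinv_0_lt_compat; lra]).
  assert (HC1 : R0 / d * (1 + Rabs lq + Rabs lr + Rabs t) >= 0) by (apply Rle_ge, Rmult_le_pos; lra).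
  exists (fun k => C * (INR k + 1) * exp (Lb k)).
  split.
  - apply ex_series_Rabs. apply (ex_series_DAlembert _ 0). lra.
    + intros n. assert (0 <= INR n) by apply pos_INR. assert (0 < exp (Lb n)) by apply exp_pos.
      assert (0 < C) by (unfold C; lra). intro Hz0.
      assert (0 < C * (INR n + 1) * exp (Lb n)) by (apply Rmult_lt_0_compat; [apply Rmult_lt_0_compat|]; lra). lra.
    + apply is_lim_seq_le_le with (fun _ => 0) (fun n => 2 * exp (m0 * lq + 2 * lr) * (q ^ 2) ^ n).
      * intros n. split. apply Rabs_pos.
        assert (Hst : exp (Lb (S n)) = exp (Lb n) * (exp (m0 * lq + 2 * lr) * (q ^ 2) ^ n))
          by (unfold Lb; apply exp_Lb_step; auto; lra).
        cbv beta. rewrite Hst.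
        assert (0 <= INR n) by apply pos_INR. assert (0 < exp (Lb n)) by apply exp_pos.
        assert (0 < C) by (unfold C; lra).
        assert (0 < exp (m0 * lq + 2 * lr)) by apply exp_pos.
        assert (0 <= (q^2)^n) by (apply pow_le; lra).
        rewrite S_INR.
        replace (C * (INR n + 1 + 1) * (exp (Lb n) * (exp (m0 * lq + 2 * lr) * (q ^ 2) ^ n)) /
                 (C * (INR n + 1) * exp (Lb n)))
          with ((INR n + 2) / (INR n + 1) * (exp (m0 * lq + 2 * lr) * (q ^ 2) ^ n)) by (field; repeat split; lra).
        replace (2 * exp (m0 * lq + 2 * lr) * (q ^ 2) ^ n) with (2 * (exp (m0 * lq + 2 * lr) * (q ^ 2) ^ n)) by ring.
        rewrite Rabs_pos_eq.
        apply Rmult_le_compat_r. apply Rmult_le_pos; lra.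
        apply (Rmult_le_reg_r (INR n + 1)). lra. unfold Rdiv. rewrite Rmult_assoc, Rinv_l by lra. lra.
        apply Rmult_le_pos. apply Rmult_le_pos. lra. left; apply Rinv_0_lt_compat; lra. apply Rmult_le_pos; lra.
      * apply is_lim_seq_const.
      * replace (Finite 0) with (Rbar_mult (2 * exp (m0 * lq + 2 * lr)) 0) by (simpl; f_equal; ring).
        apply is_lim_seq_scal_l. apply is_lim_seq_geom. rewrite Rabs_pos_eq; lra.
  - intros b k m Hm.
    assert (HK : 0 <= INR k) by apply pos_INR.
    assert (HKK : 0 <= KK q k <= / d).
    { unfold KK. assert (0 <= (1 - q^2)^k <= 1) by (split; [apply pow_le; lra| apply pow_le1; lra]).
      specialize (Hdk k).
      split. apply Rmult_le_pos; [lra | left; apply Rinv_0_lt_compat; lra].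
      apply Rle_trans with (1 * / qpoch (q^2) (q^2) k). apply Rmult_le_compat_r. left; apply Rinv_0_lt_compat; lra. lra.
      rewrite Rmult_1_l. apply Rinv_le_contravar; lra. }
    set (L := INR k * (m + INR k) * lq + (m + 2 * INR k) * lr).
    assert (HL : L <= Lb k).
    { unfold L, Lb.
      assert (INR k * (m + INR k) * lq <= INR k * (m0 - 1 + INR k) * lq).
      { assert (0 <= INR k * (m - m0 + 1)) by (apply Rmult_le_pos; lra). nra. }
      assert ((m + 2 * INR k) * lr <= (m0 + 2 * INR k) * lr + Rabs lr).
      { destruct (Rle_dec 0 lr). rewrite Rabs_pos_eq by lra. nra. rewrite Rabs_left by lra. nra. }
      lra. }
    assert (HE : 0 < exp L <= exp (Lb k)) by (split; [apply exp_pos| apply exp_le_mono; auto]).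
    destruct (HRb (m + INR k + 1) ltac:(lra)) as [Hrg Hrgd].
    destruct (trig_le b ((m + 2 * INR k) * t)) as [Htr Htrd].
    assert (HEb : 0 < exp (Lb k)) by apply exp_pos.
    assert (HCk : / d * R0 * (1 + Rabs lq + Rabs lr + Rabs t) * (INR k + 1) * exp (Lb k)
                  <= C * (INR k + 1) * exp (Lb k)).
    { apply Rmult_le_compat_r. lra. apply Rmult_le_compat_r. lra. unfold C, Rdiv. rewrite (Rmult_comm R0). lra. }
    split.
    + unfold fT. fold lq lr t. fold L.
      rewrite !Rabs_mult. rewrite (Rabs_pos_eq (KK q k)) by lra. rewrite (Rabs_pos_eq (exp L)) by lra.
      apply Rle_trans with (/ d * R0 * (exp (Lb k) * 1)).
      * apply Rmult_le_compat. apply Rmult_le_pos; [lra|apply Rabs_pos].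
        apply Rmult_le_pos; [lra|apply Rabs_pos].
        apply Rmult_le_compat; try lra. apply Rabs_pos.
        apply Rmult_le_compat; try lra. apply Rabs_pos.
      * eapply Rle_trans; [|exact HCk].
        rewrite Rmult_1_r.
        assert (0 <= / d * R0) by (apply Rmult_le_pos; [left; apply Rinv_0_lt_compat|]; lra).
        assert (1 <= (1 + Rabs lq + Rabs lr + Rabs t) * (INR k + 1)) by nra.
        replace (/ d * R0 * (1 + Rabs lq + Rabs lr + Rabs t) * (INR k + 1) * exp (Lb k))
          with ((/ d * R0 * exp (Lb k)) * ((1 + Rabs lq + Rabs lr + Rabs t) * (INR k + 1))) by ring.
        rewrite <- (Rmult_1_r (/ d * R0 * exp (Lb k))) at 1.
        apply Rmult_le_compat_l. apply Rmult_le_pos; lra. lra.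
    + unfold fTd. fold lq lr t. fold L.
      set (tr := trig b ((m + 2 * INR k) * t)) in *.
      set (trd := trigd b ((m + 2 * INR k) * t)) in *.
      assert (A1 : Rabs (rgd (q ^ 2) (m + INR k + 1) * (exp L * tr)) <= R0 * exp (Lb k)).
      { rewrite !Rabs_mult. rewrite (Rabs_pos_eq (exp L)) by lra.
        rewrite <- (Rmult_1_r (exp (Lb k))). apply Rmult_le_compat; try apply Rabs_pos; auto.
        apply Rmult_le_pos; [lra|apply Rabs_pos]. apply Rmult_le_compat; try lra. apply Rabs_pos. }
      assert (A2 : Rabs ((INR k * lq + lr) * tr + t * trd) <= INR k * Rabs lq + Rabs lr + Rabs t).
      { eapply Rle_trans. apply Rabs_triang. rewrite !Rabs_mult.
        assert (Rabs (INR k * lq + lr) <= INR k * Rabs lq + Rabs lr).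
        { eapply Rle_trans. apply Rabs_triang. rewrite Rabs_mult, (Rabs_pos_eq (INR k)) by lra. lra. }
        assert (0 <= Rabs tr) by apply Rabs_pos. assert (0 <= Rabs trd) by apply Rabs_pos.
        assert (Rabs (INR k * lq + lr) * Rabs tr <= INR k * Rabs lq + Rabs lr).
        { rewrite <- (Rmult_1_r (INR k * Rabs lq + Rabs lr)). apply Rmult_le_compat; try apply Rabs_pos; lra. }
        assert (Rabs t * Rabs trd <= Rabs t).
        { rewrite <- (Rmult_1_r (Rabs t)) at 2. apply Rmult_le_compat_l; lra. }
        lra. }
      assert (A3 : Rabs (rg (q ^ 2) (m + INR k + 1) * (exp L * ((INR k * lq + lr) * tr + t * trd)))
                   <= R0 * (exp (Lb k) * (INR k * Rabs lq + Rabs lr + Rabs t))).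
      { rewrite !Rabs_mult. rewrite (Rabs_pos_eq (exp L)) by lra.
        apply Rmult_le_compat; try apply Rabs_pos; auto. apply Rmult_le_pos; [lra|apply Rabs_pos].
        apply Rmult_le_compat; try lra. apply Rabs_pos. }
      rewrite Rabs_mult, (Rabs_pos_eq (KK q k)) by lra.
      eapply Rle_trans. apply Rmult_le_compat. lra. apply Rabs_pos. apply HKK.
      eapply Rle_trans. apply Rabs_triang. apply Rplus_le_compat; [exact A1| exact A3].
      eapply Rle_trans; [|exact HCk].
      assert (0 <= R0 * exp (Lb k)) by (apply Rmult_le_pos; lra).
      assert (0 < / d) by (apply Rinv_0_lt_compat; lra).
      replace (R0 * exp (Lb k) + R0 * (exp (Lb k) * (INR k * Rabs lq + Rabs lr + Rabs t)))
        with (R0 * exp (Lb k) * (1 + INR k * Rabs lq + Rabs lr + Rabs t)) by ring.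
      replace (/ d * R0 * (1 + Rabs lq + Rabs lr + Rabs t) * (INR k + 1) * exp (Lb k))
        with (/ d * (R0 * exp (Lb k) * ((1 + Rabs lq + Rabs lr + Rabs t) * (INR k + 1)))) by ring.
      apply Rmult_le_compat_l. lra. apply Rmult_le_compat_l. lra.
      destruct Habs as [H1 [H2 H3]]. nra.
Qed.

Lemma fT_ex b q w mu : 0 < q < 1 -> ex_series (fun k => fT b q w k mu).
Proof.
  intros Hq. destruct (fT_bounds q w mu Hq) as [M [HM Hb]].
  apply (exR_le _ M); auto. intros k. apply (Hb b k mu). lra.
Qed.

Lemma cex_tI q mu w : 0 < q < 1 -> cex (tI q mu w).
Proof.
  intros Hq. split.
  - eapply ex_series_ext; [|apply (fT_ex true q w mu Hq)]. intros k. symmetry. apply (tI_parts q mu w k Hq).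
  - eapply ex_series_ext; [|apply (fT_ex false q w mu Hq)]. intros k. symmetry. apply (tI_parts q mu w k Hq).
Qed.

Lemma Iq3_parts q mu w : 0 < q < 1 ->
  Re (Iq3 q mu w) = Series (fun k => fT true q w k mu) /\
  Im (Iq3 q mu w) = Series (fun k => fT false q w k mu).
Proof.
  intros Hq. rewrite Iq3_tI. unfold CSeries, Re, Im. cbn [fst snd]. split; apply Series_ext; intros k;
  apply (tI_parts q mu w k Hq).
Qed.

Lemma I_diff b q w m0 (e : nat -> R) : 0 < q < 1 -> is_lim_seq e 0 -> (forall j, e j <> 0) ->
  is_lim_seq (fun j => (Series (fun k => fT b q w k (m0 + e j)) - Series (fun k => fT b q w k m0)) / e j)
             (Series (fun k => fTd b q w k m0)).
Proof.
  intros Hq He Hn. destruct (fT_bounds q w m0 Hq) as [M [HM Hb]].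
  apply (series_diff (fun k => fT b q w k) (fun k => fTd b q w k) M m0); auto.
  intros k m _. apply fT_derive; auto.
Qed.


Ltac Ceq := apply C_ext; unfold Re, Im, Cminus, Cplus, Copp, Cmult, RtoC; cbn [fst snd]; ring.

Lemma Rpower_sq q x : 0 < q -> Rpower (q ^ 2) x = Rpower q (2 * x).
Proof. intros Hq. unfold Rpower. f_equal. rewrite ln_pow by auto. simpl. ring. Qed.

Lemma Rpower_sqrt q y : 0 < q -> Rpower (sqrt q) y = Rpower q (y / 2).
Proof.
  intros Hq. unfold Rpower. f_equal.
  assert (Hs : 0 < sqrt q) by (apply sqrt_lt_R0; auto).
  assert (H : ln (sqrt q * sqrt q) = ln q) by (rewrite sqrt_sqrt; lra).
  rewrite ln_mult in H by auto. replace (ln (sqrt q)) with (ln q / 2) by lra. field.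
Qed.

Lemma coefA q mu k : 0 < q < 1 ->
  coefI q mu k - Rpower q mu * coefI q mu k * Rpower q (mu + 2 * INR k)
  = (1 - q ^ 2) * Rpower q ((1 - mu) / 2) * (Rpower (sqrt q) (mu - 1 + 2 * INR k) * coefI q (mu - 1) k).
Proof.
  intros Hq. assert (HQ := Q_bounds q Hq).
  rewrite !coefI_rg by auto.
  replace (mu - 1 + INR k + 1) with (mu + INR k) by ring.
  rewrite (rg_fun (q ^ 2) (mu + INR k)) by auto. unfold br.
  rewrite Rpower_sq, Rpower_sqrt by lra.
  assert (Hk : Rpower q ((1 - mu) / 2) * Rpower q ((mu - 1 + 2 * INR k) / 2) * Rpower q (INR k * (mu - 1 + INR k))
               = Rpower q (INR k * (mu + INR k))).
  { rewrite <- !Rpower_plus. f_equal. field. }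
  assert (Hm : Rpower q mu * Rpower q (mu + 2 * INR k) = Rpower q (2 * (mu + INR k))).
  { rewrite <- Rpower_plus. f_equal. ring. }
  transitivity (Rpower q (INR k * (mu + INR k)) * KK q k * rg (q ^ 2) (mu + INR k + 1)
                * (1 - Rpower q (2 * (mu + INR k)))).
  - rewrite <- Hm. ring.
  - rewrite <- Hk. field. lra.
Qed.

Lemma coefB q mu k : 0 < q < 1 ->
  coefI q (- mu) (S k) - Rpower q mu * coefI q (- mu) (S k) * Rpower q (- mu + 2 * INR (S k))
  = (1 - q ^ 2) * Rpower q ((1 - mu) / 2) * (Rpower (sqrt q) (1 - mu + 2 * INR k) * coefI q (1 - mu) k).
Proof.
  intros Hq. assert (HQ := Q_bounds q Hq).
  rewrite !coefI_rg by auto.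
  replace (- mu + INR (S k) + 1) with (1 - mu + INR k + 1) by (rewrite S_INR; ring).
  rewrite Rpower_sqrt by lra.
  assert (Hm : Rpower q mu * Rpower q (- mu + 2 * INR (S k)) = q ^ 2 * (q ^ 2) ^ k).
  { rewrite <- Rpower_plus. replace (mu + (- mu + 2 * INR (S k))) with (2 * INR (S k)) by ring.
    rewrite <- Rpower_sq by lra. rewrite Rpower_pow by lra. reflexivity. }
  assert (Hk : Rpower q ((1 - mu) / 2) * Rpower q ((1 - mu + 2 * INR k) / 2) * Rpower q (INR k * (1 - mu + INR k))
               = Rpower q (INR (S k) * (- mu + INR (S k)))).
  { rewrite <- !Rpower_plus. f_equal. rewrite S_INR. field. }
  unfold KK. rewrite qpoch_S.
  change ((1 - q ^ 2) ^ (S k)) with ((1 - q ^ 2) * (1 - q ^ 2) ^ k).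
  assert (Hp := qpoch_pos (q ^ 2) (q ^ 2) k HQ ltac:(lra)).
  assert (H1 : 0 < q ^ 2 * (q ^ 2) ^ k < 1).
  { assert (H2 := powS_lt1 (q^2) k HQ). exact H2. }
  set (P := qpoch (q ^ 2) (q ^ 2) k) in *.
  set (G := rg (q ^ 2) (1 - mu + INR k + 1)).
  set (Qk := q ^ 2 * (q ^ 2) ^ k) in *.
  transitivity (Rpower q (INR (S k) * (- mu + INR (S k))) * (1 - q ^ 2) ^ k / P * G * (1 - q ^ 2)).
  - replace (Rpower q (INR (S k) * (- mu + INR (S k))) * ((1 - q ^ 2) * (1 - q ^ 2) ^ k / (P * (1 - Qk))) * G -
       Rpower q mu * (Rpower q (INR (S k) * (- mu + INR (S k))) * ((1 - q ^ 2) * (1 - q ^ 2) ^ k / (P * (1 - Qk))) * G) *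
       Rpower q (- mu + 2 * INR (S k)))
      with (Rpower q (INR (S k) * (- mu + INR (S k))) * ((1 - q ^ 2) * (1 - q ^ 2) ^ k / (P * (1 - Qk))) * G *
            (1 - Rpower q mu * Rpower q (- mu + 2 * INR (S k)))) by ring.
    rewrite Hm. fold Qk. field. split; lra.
  - rewrite <- Hk. field. lra.
Qed.

Lemma half_scal r w : Cdiv (Cmult (RtoC r) w) (RtoC 2) = Cmult (RtoC r) (Cdiv w (RtoC 2)).
Proof. rewrite !Cdiv2. Ceq. Qed.

Lemma tI_scal q mu r w k : 0 < r -> slit_plane w ->
  tI q mu (Cmult (RtoC r) w) k = Cmult (RtoC (Rpower r (mu + 2 * INR k))) (tI q mu w k).
Proof.
  intros Hr Hw. unfold tI. rewrite half_scal. rewrite Cpow_scal; auto.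
  Ceq. rewrite Cdiv2. apply slit_scal; auto. lra.
Qed.

Lemma slit_half w : slit_plane w -> slit_plane (Cdiv w (RtoC 2)).
Proof. intros. rewrite Cdiv2. apply slit_scal; auto. lra. Qed.

Lemma tI_succ q mu w k : slit_plane w ->
  tI q mu w k = Cmult (Cdiv w (RtoC 2)) (Cmult (RtoC (coefI q mu k)) (Cpow_pr (Cdiv w (RtoC 2)) (mu - 1 + 2 * INR k))).
Proof.
  intros Hw. unfold tI. replace (mu + 2 * INR k) with ((mu - 1 + 2 * INR k) + 1) by ring.
  rewrite Cpow_succ by (apply slit_half; auto). Ceq.
Qed.

Lemma sqrt_pos q : 0 < q -> 0 < sqrt q.
Proof. intros; apply sqrt_lt_R0; auto. Qed.

Definition Kc (q mu : R) : R := (1 - q ^ 2) * Rpower q ((1 - mu) / 2).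

Lemma termA q mu w k : 0 < q < 1 -> slit_plane w ->
  Cminus (Cmult (Cpow_pr w mu) (tI q mu w k))
         (Cmult (Cpow_pr (Cmult (RtoC q) w) mu) (tI q mu (Cmult (RtoC q) w) k))
  = Cmult (RtoC (Kc q mu)) (Cmult (Cdiv w (RtoC 2))
      (Cmult (Cpow_pr w mu) (tI q (mu - 1) (Cmult (RtoC (sqrt q)) w) k))).
Proof.
  intros Hq Hw. assert (Hs := sqrt_pos q ltac:(lra)).
  rewrite Cpow_scal by (auto; lra).
  rewrite tI_scal by (auto; lra). rewrite (tI_scal q (mu - 1) (sqrt q)) by auto.
  rewrite (tI_succ q mu w k Hw). unfold tI.
  set (P := Cpow_pr w mu). set (hw := Cdiv w (RtoC 2)). set (X := Cpow_pr hw (mu - 1 + 2 * INR k)).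
  transitivity (Cmult (RtoC (coefI q mu k - Rpower q mu * coefI q mu k * Rpower q (mu + 2 * INR k)))
                      (Cmult hw (Cmult P X))).
  - Ceq.
  - rewrite coefA by auto. unfold Kc. Ceq.
Qed.

Lemma termB0 q mu w : 0 < q < 1 -> slit_plane w ->
  Cminus (Cmult (Cpow_pr w mu) (tI q (- mu) w 0))
         (Cmult (Cpow_pr (Cmult (RtoC q) w) mu) (tI q (- mu) (Cmult (RtoC q) w) 0)) = RtoC 0.
Proof.
  intros Hq Hw.
  rewrite Cpow_scal by (auto; lra). rewrite tI_scal by (auto; lra).
  assert (H : Rpower q mu * Rpower q (- mu + 2 * INR 0) = 1).
  { rewrite <- Rpower_plus. simpl. replace (mu + (- mu + 2 * 0)) with 0 by ring. apply Rpower_O; lra. }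
  transitivity (Cmult (RtoC (1 - Rpower q mu * Rpower q (- mu + 2 * INR 0))) (Cmult (Cpow_pr w mu) (tI q (- mu) w 0))).
  - Ceq.
  - rewrite H. Ceq.
Qed.

Lemma termB q mu w k : 0 < q < 1 -> slit_plane w ->
  Cminus (Cmult (Cpow_pr w mu) (tI q (- mu) w (S k)))
         (Cmult (Cpow_pr (Cmult (RtoC q) w) mu) (tI q (- mu) (Cmult (RtoC q) w) (S k)))
  = Cmult (RtoC (Kc q mu)) (Cmult (Cdiv w (RtoC 2))
      (Cmult (Cpow_pr w mu) (tI q (1 - mu) (Cmult (RtoC (sqrt q)) w) k))).
Proof.
  intros Hq Hw. assert (Hs := sqrt_pos q ltac:(lra)).
  rewrite Cpow_scal by (auto; lra).
  rewrite tI_scal by (auto; lra). rewrite (tI_scal q (1 - mu) (sqrt q)) by auto.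
  rewrite (tI_succ q (- mu) w (S k) Hw). unfold tI.
  replace (- mu - 1 + 2 * INR (S k)) with (1 - mu + 2 * INR k) by (rewrite S_INR; ring).
  set (P := Cpow_pr w mu). set (hw := Cdiv w (RtoC 2)). set (X := Cpow_pr hw (1 - mu + 2 * INR k)).
  transitivity (Cmult (RtoC (coefI q (- mu) (S k) - Rpower q mu * coefI q (- mu) (S k) * Rpower q (- mu + 2 * INR (S k))))
                      (Cmult hw (Cmult P X))).
  - Ceq.
  - rewrite coefB by auto. unfold Kc. Ceq.
Qed.

Lemma Csc (c : C) (u : nat -> C) : cex u -> Cmult c (CSeries u) = CSeries (fun k => Cmult c (u k)).
Proof. intros H. symmetry. apply CSeries_scal; auto. Qed.

Lemma serA q mu w : 0 < q < 1 -> slit_plane w ->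
  Cminus (Cmult (Cpow_pr w mu) (Iq3 q mu w))
         (Cmult (Cpow_pr (Cmult (RtoC q) w) mu) (Iq3 q mu (Cmult (RtoC q) w)))
  = Cmult (RtoC (Kc q mu)) (Cmult (Cdiv w (RtoC 2))
      (Cmult (Cpow_pr w mu) (Iq3 q (mu - 1) (Cmult (RtoC (sqrt q)) w)))).
Proof.
  intros Hq Hw. rewrite !Iq3_tI.
  rewrite !Csc by (repeat apply cex_scal; apply cex_tI; auto).
  rewrite <- CSeries_minus by (apply cex_scal; apply cex_tI; auto).
  apply CSeries_ext. intros k. apply termA; auto.
Qed.

Lemma serB q mu w : 0 < q < 1 -> slit_plane w ->
  Cminus (Cmult (Cpow_pr w mu) (Iq3 q (- mu) w))
         (Cmult (Cpow_pr (Cmult (RtoC q) w) mu) (Iq3 q (- mu) (Cmult (RtoC q) w)))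
  = Cmult (RtoC (Kc q mu)) (Cmult (Cdiv w (RtoC 2))
      (Cmult (Cpow_pr w mu) (Iq3 q (1 - mu) (Cmult (RtoC (sqrt q)) w)))).
Proof.
  intros Hq Hw. rewrite !Iq3_tI.
  rewrite !Csc by (repeat apply cex_scal; apply cex_tI; auto).
  rewrite <- CSeries_minus by (apply cex_scal; apply cex_tI; auto).
  rewrite CSeries_shift by (apply cex_minus; apply cex_scal; apply cex_tI; auto).
  rewrite termB0 by auto.
  rewrite (CSeries_ext _ (fun k => Cmult (RtoC (Kc q mu)) (Cmult (Cdiv w (RtoC 2))
      (Cmult (Cpow_pr w mu) (tI q (1 - mu) (Cmult (RtoC (sqrt q)) w) k))))) by (intros; apply termB; auto).
  Ceq.
Qed.

Definition Kf (q mu : R) : R := / 2 * Rpower q (- mu ^ 2 + mu) * qGamma (q ^ 2) mu * qGamma (q ^ 2) (1 - mu).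

Lemma Kq3_formula_Kf q mu w : Kq3_formula q mu w = Cmult (RtoC (Kf q mu)) (Cminus (Iq3 q (- mu) w) (Iq3 q mu w)).
Proof. reflexivity. Qed.

Lemma Kf_shift q mu : 0 < q < 1 -> Kf q mu = - Kf q (mu - 1).
Proof.
  intros Hq. assert (HQ := Q_bounds q Hq). unfold Kf. rewrite !qGamma_rg by auto.
  replace (1 - (mu - 1)) with (1 - mu + 1) by ring.
  rewrite (rg_fun _ (mu - 1)), (rg_fun _ (1 - mu)) by auto.
  replace (mu - 1 + 1) with mu by ring.
  unfold br. rewrite !Rpower_sq by lra.
  set (u := Rpower q (2 * (mu - 1))). set (v := Rpower q (2 * (1 - mu))).
  assert (Huv : u * v = 1).
  { unfold u, v. rewrite <- Rpower_plus. replace (2 * (mu - 1) + 2 * (1 - mu)) with 0 by ring. apply Rpower_O; lra. }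
  assert (Hu : 0 < u) by (apply Rpower_pos; lra).
  assert (HE : Rpower q (- (mu - 1) ^ 2 + (mu - 1)) = Rpower q (- mu ^ 2 + mu) * u).
  { unfold u. rewrite <- Rpower_plus. f_equal. ring. }
  rewrite HE.
  replace (1 - u) with (- (u * (1 - v))) by (rewrite Rmult_minus_distr_l, Huv; ring).
  unfold Rdiv. rewrite !Rinv_mult, !Rinv_opp, !Rinv_mult, !Rinv_inv.
  set (ia := / rg (q ^ 2) mu). set (ib := / rg (q ^ 2) (1 - mu + 1)). set (iv := / (1 - v)).
  field. lra.
Qed.

Lemma Kf_neg q mu : 0 < q < 1 -> Kf q (- mu) = - Kf q mu.
Proof.
  intros Hq. assert (HQ := Q_bounds q Hq). unfold Kf. rewrite !qGamma_rg by auto.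
  replace (1 - - mu) with (mu + 1) by ring.
  rewrite (rg_fun _ (- mu)), (rg_fun _ mu) by auto.
  replace (- mu + 1) with (1 - mu) by ring.
  unfold br. rewrite !Rpower_sq by lra.
  set (u := Rpower q (2 * - mu)). set (v := Rpower q (2 * mu)).
  assert (Huv : u * v = 1).
  { unfold u, v. rewrite <- Rpower_plus. replace (2 * - mu + 2 * mu) with 0 by ring. apply Rpower_O; lra. }
  assert (Hu : 0 < u) by (apply Rpower_pos; lra).
  assert (HE : Rpower q (- (- mu) ^ 2 + - mu) = Rpower q (- mu ^ 2 + mu) * u).
  { unfold u. rewrite <- Rpower_plus. f_equal. ring. }
  rewrite HE.
  replace (1 - u) with (- (u * (1 - v))) by (rewrite Rmult_minus_distr_l, Huv; ring).
  unfold Rdiv. rewrite !Rinv_mult, !Rinv_opp, !Rinv_mult, !Rinv_inv.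
  set (ia := / rg (q ^ 2) (mu + 1)). set (ib := / rg (q ^ 2) (1 - mu)). set (iv := / (1 - v)).
  field. lra.
Qed.

Lemma Fid q mu w : 0 < q < 1 -> slit_plane w ->
  Cminus (Cmult (Cpow_pr w mu) (Kq3_formula q mu w))
         (Cmult (Cpow_pr (Cmult (RtoC q) w) mu) (Kq3_formula q mu (Cmult (RtoC q) w)))
  = Copp (Cmult (RtoC (Kc q mu)) (Cmult (Cdiv w (RtoC 2))
      (Cmult (Cpow_pr w mu) (Kq3_formula q (mu - 1) (Cmult (RtoC (sqrt q)) w))))).
Proof.
  intros Hq Hw. rewrite !Kq3_formula_Kf.
  set (P := Cpow_pr w mu). set (P' := Cpow_pr (Cmult (RtoC q) w) mu).
  transitivity (Cmult (RtoC (Kf q mu))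
     (Cminus (Cminus (Cmult P (Iq3 q (- mu) w)) (Cmult P' (Iq3 q (- mu) (Cmult (RtoC q) w))))
             (Cminus (Cmult P (Iq3 q mu w)) (Cmult P' (Iq3 q mu (Cmult (RtoC q) w)))))).
  - Ceq.
  - unfold P, P'. rewrite serA, serB by auto.
    replace (- (mu - 1)) with (1 - mu) by ring.
    rewrite (Kf_shift q mu Hq). Ceq.
Qed.

Lemma RtoC_nz r : r <> 0 -> RtoC r <> RtoC 0.
Proof. intros H H1. apply H. apply (f_equal fst) in H1. simpl in H1. auto. Qed.

Lemma Fid_main q mu z : 0 < q < 1 -> slit_plane z ->
  Cmult (Cdiv (RtoC 2) (Cmult (RtoC (1 + q)) z))
        (qderiv q (fun w => Cmult (Cpow_pr w mu) (Kq3_formula q mu w)) z)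
  = Copp (Cmult (RtoC (Rpower q (- ((mu - 1) / 2))))
                (Cmult (Cpow_pr z (mu - 1)) (Kq3_formula q (mu - 1) (Cmult (RtoC (sqrt q)) z)))).
Proof.
  intros Hq Hz. unfold qderiv. rewrite Fid by auto.
  assert (HP : Cpow_pr z mu = Cmult z (Cpow_pr z (mu - 1))).
  { rewrite <- Cpow_succ by auto. f_equal. ring. }
  rewrite HP. replace (- ((mu - 1) / 2)) with ((1 - mu) / 2) by field.
  unfold Kc. rewrite Cdiv2.
  set (r := Rpower q ((1 - mu) / 2)).
  replace (RtoC ((1 - q ^ 2) * r)) with (Cmult (Cmult (RtoC (1 + q)) (RtoC (1 - q))) (RtoC r)) by Ceq.
  rewrite RtoC_inv by lra.
  assert (Hz0 := slit_nz z Hz).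
  assert (H1 := RtoC_nz (1 + q) ltac:(lra)). assert (H2 := RtoC_nz (1 - q) ltac:(lra)).
  assert (H3 := RtoC_nz 2 ltac:(lra)).
  field. repeat split; auto.
Qed.

Lemma Kformula_neg q mu w : 0 < q < 1 -> Kq3_formula q (- mu) w = Kq3_formula q mu w.
Proof.
  intros Hq. rewrite !Kq3_formula_Kf. rewrite Kf_neg by auto. rewrite Ropp_involutive. Ceq.
Qed.

Lemma Fid_main2 q mu z : 0 < q < 1 -> slit_plane z ->
  Cmult (Cdiv (RtoC 2) (Cmult (RtoC (1 + q)) z))
        (qderiv q (fun w => Cmult (Cpow_pr w (- mu)) (Kq3_formula q mu w)) z)
  = Copp (Cmult (RtoC (Rpower q ((mu + 1) / 2)))
                (Cmult (Cpow_pr z (- mu - 1)) (Kq3_formula q (mu + 1) (Cmult (RtoC (sqrt q)) z)))).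
Proof.
  intros Hq Hz. assert (H := Fid_main q (- mu) z Hq Hz).
  unfold qderiv in *. rewrite !Kformula_neg in H by auto.
  replace (- mu - 1) with (- (mu + 1)) in H by ring.
  rewrite Kformula_neg in H by auto.
  replace (- ((- (mu + 1)) / 2)) with ((mu + 1) / 2) in H by field.
  replace (- mu - 1) with (- (mu + 1)) by ring. exact H.
Qed.


Lemma KK_rg_shift q m k : 0 < q < 1 ->
  KK q (m + k) * rg (q ^ 2) (INR k + 1) = KK q k * rg (q ^ 2) (INR m + INR k + 1).
Proof.
  intros Hq. assert (HQ := Q_bounds q Hq). induction m.
  - simpl. f_equal. f_equal. ring.
  - replace (S m + k)%nat with (S (m + k)) by lia.
    unfold KK in *. rewrite qpoch_S.
    change ((1 - q ^ 2) ^ S (m + k)) with ((1 - q ^ 2) * (1 - q ^ 2) ^ (m + k)).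
    assert (Hp := qpoch_pos (q ^ 2) (q ^ 2) (m + k) HQ ltac:(lra)).
    assert (H1 := powS_lt1 (q ^ 2) (m + k) HQ).
    change ((q ^ 2) ^ S (m + k)) with (q ^ 2 * (q ^ 2) ^ (m + k)) in H1.
    rewrite (rg_fun _ (INR m + INR k + 1)) in IHm by auto.
    unfold br in IHm. 
    replace (INR m + INR k + 1) with (INR (S (m + k))) in IHm by (rewrite S_INR, plus_INR; ring).
    rewrite Rpower_pow in IHm by lra.
    replace (INR (S (m + k)) + 1) with (INR (S m) + INR k + 1) in IHm by (rewrite !S_INR, plus_INR; ring).
    change ((q ^ 2) ^ S (m + k)) with (q ^ 2 * (q ^ 2) ^ (m + k)) in IHm.
    set (P := qpoch (q ^ 2) (q ^ 2) (m + k)) in *.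
    set (Qk := q ^ 2 * (q ^ 2) ^ (m + k)) in *.
    set (G := rg (q ^ 2) (INR (S m) + INR k + 1)) in *.
    set (G1 := rg (q ^ 2) (INR k + 1)) in *.
    assert (E1 : (1 - q ^ 2) * (1 - q ^ 2) ^ (m + k) / (P * (1 - Qk)) * G1
                 = (1 - q ^ 2) / (1 - Qk) * ((1 - q ^ 2) ^ (m + k) / P * G1)).
    { field. split; apply Rgt_not_eq || apply Rlt_not_eq; lra. }
    assert (Hpk := qpoch_pos (q ^ 2) (q ^ 2) k HQ ltac:(lra)).
    rewrite E1, IHm. field. repeat split; apply Rgt_not_eq || apply Rlt_not_eq; lra.
Qed.

Lemma tI_neg_low q m w k : 0 < q < 1 -> (k < m)%nat -> tI q (- INR m) w k = RtoC 0.
Proof.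
  intros Hq Hk. unfold tI. rewrite coefI_rg by auto.
  replace (- INR m + INR k + 1) with (- INR (m - k - 1)) by (rewrite !minus_INR by lia; simpl; ring).
  rewrite rg_negint by (apply Q_bounds; auto). Ceq.
Qed.

Lemma tI_neg_high q m w k : 0 < q < 1 -> tI q (- INR m) w (m + k) = tI q (INR m) w k.
Proof.
  intros Hq. unfold tI. rewrite !coefI_rg by auto.
  replace (- INR m + INR (m + k) + 1) with (INR k + 1) by (rewrite plus_INR; ring).
  replace (- INR m + 2 * INR (m + k)) with (INR m + 2 * INR k) by (rewrite plus_INR; ring).
  replace (INR (m + k) * (- INR m + INR (m + k))) with (INR k * (INR m + INR k)) by (rewrite plus_INR; ring).
  rewrite Rmult_assoc. rewrite KK_rg_shift by auto. Ceq.
Qed.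

Lemma Iq3_negnat q m w : 0 < q < 1 -> Iq3 q (- INR m) w = Iq3 q (INR m) w.
Proof.
  intros Hq. rewrite !Iq3_tI. unfold CSeries.
  rewrite (Series_incr_n_aux (fun k => Re (tI q (- INR m) w k)) m).
  rewrite (Series_incr_n_aux (fun k => Im (tI q (- INR m) w k)) m).
  - f_equal; apply Series_ext; intros k; rewrite tI_neg_high; auto.
  - intros k Hk. rewrite tI_neg_low; auto.
  - intros k Hk. rewrite tI_neg_low; auto.
Qed.

Lemma Iq3_negint q n w : 0 < q < 1 -> (exists z, n = IZR z) -> Iq3 q (- n) w = Iq3 q n w.
Proof.
  intros Hq [z Hz]. subst n. destruct (Z.le_gt_cases 0 z) as [H|H].
  - rewrite <- (Z2Nat.id z H). rewrite <- INR_IZR_INZ. apply Iq3_negnat; auto.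
  - replace z with (- Z.of_nat (Z.to_nat (- z)))%Z by lia.
    rewrite opp_IZR, <- INR_IZR_INZ, Ropp_involutive. symmetry. apply Iq3_negnat; auto.
Qed.

Lemma Int_part_IZR z : Int_part (IZR z) = z.
Proof.
  unfold Int_part. rewrite <- (tech_up (IZR z) (z + 1)). lia.
  rewrite plus_IZR; lra. rewrite plus_IZR; lra.
Qed.

Lemma is_int_iff x : x = IZR (Int_part x) <-> exists z, x = IZR z.
Proof.
  split. intros H; eauto. intros [z Hz]. subst. rewrite Int_part_IZR. auto.
Qed.

Lemma int_shift x c : (exists z, c = IZR z) -> ((exists z, x = IZR z) <-> (exists z, x + c = IZR z)).
Proof.
  intros [zc Hc]. subst. split.
  - intros [z Hz]. exists (z + zc)%Z. rewrite plus_IZR. lra.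
  - intros [z Hz]. exists (z - zc)%Z. rewrite minus_IZR. lra.
Qed.

Lemma Kq3_nonint q x w : ~ (exists z, x = IZR z) -> Kq3 q x w = Kq3_formula q x w.
Proof.
  intros H. unfold Kq3. destruct (Req_EM_T x (IZR (Int_part x))) as [E|E]; auto.
  exfalso. apply H. eauto.
Qed.

Lemma Kq3_int q x w : (exists z, x = IZR z) ->
  Kq3 q x w = (real (Lim_seq (fun j => Re (Kq3_formula q (x + / (INR j + 1)) w))),
               real (Lim_seq (fun j => Im (Kq3_formula q (x + / (INR j + 1)) w)))).
Proof.
  intros H. unfold Kq3. destruct (Req_EM_T x (IZR (Int_part x))) as [E|E].
  - unfold Lim. simpl. reflexivity.
  - exfalso. apply E. apply is_int_iff; auto.
Qed.


Lemma is_lim_seq_opp' (u : nat -> R) (l : R) : is_lim_seq u l -> is_lim_seq (fun n => - u n) (- l).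
Proof. intros H. apply (is_lim_seq_opp u l) in H. exact H. Qed.

Definition ej (j : nat) : R := / (INR j + 1).

Lemma ej_lim : is_lim_seq ej 0.
Proof.
  unfold ej. replace (Finite 0) with (Rbar_inv p_infty) by reflexivity.
  apply is_lim_seq_inv. 2: discriminate.
  apply (is_lim_seq_le_p_loc INR). exists 0%nat. intros; lra. apply is_lim_seq_INR.
Qed.

Lemma ej_nz j : ej j <> 0.
Proof. unfold ej. apply Rinv_neq_0_compat. assert (0 <= INR j) by apply pos_INR. lra. Qed.

Lemma ej_neg_lim : is_lim_seq (fun j => - ej j) 0.
Proof.
  replace (Finite 0) with (Rbar_mult (-1) 0) by (simpl; f_equal; ring).
  eapply is_lim_seq_ext; [|apply (is_lim_seq_scal_l _ (-1) _ ej_lim)]. intros; simpl; ring.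
Qed.

Definition hh (Q m : R) : R := rg Q m * rg Q (1 - m).
Definition hhd (Q m : R) : R := rgd Q m * rg Q (1 - m) - rg Q m * rgd Q (1 - m).

Lemma hh_derive Q m : 0 < Q < 1 -> is_derive (hh Q) m (hhd Q m).
Proof.
  intros HQ. unfold hh, hhd. auto_derive.
  - repeat split; eexists; apply rg_derive; auto.
  - rewrite !(is_derive_unique _ _ _ (rg_derive Q _ HQ)).
    match goal with |- ?a = ?b => change (@eq R a b) end. unfold Rminus. ring.
Qed.

Lemma hh_int Q n : 0 < Q < 1 -> (exists z, n = IZR z) -> hh Q n = 0 /\ hhd Q n <> 0.
Proof.
  intros HQ [z Hz]. subst n. unfold hh, hhd.
  destruct (Z.le_gt_cases z 0) as [H|H].
  - replace z with (- Z.of_nat (Z.to_nat (- z)))%Z by lia.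
    rewrite opp_IZR, <- INR_IZR_INZ. set (m := Z.to_nat (- z)).
    rewrite rg_negint by auto. replace (1 - - INR m) with (INR m + 1) by ring.
    split. ring. rewrite Rmult_0_l, Rminus_0_r.
    apply Rmult_integral_contrapositive_currified. apply rgd_negint; auto. apply rg_posint; auto.
  - replace z with (Z.of_nat (Z.to_nat (z - 1)) + 1)%Z by lia.
    rewrite plus_IZR, <- INR_IZR_INZ. set (m := Z.to_nat (z - 1)).
    replace (1 - (INR m + 1)) with (- INR m) by ring.
    rewrite rg_negint by auto. split. ring. rewrite Rmult_0_r, Rminus_0_l.
    apply Ropp_neq_0_compat. apply Rmult_integral_contrapositive_currified. apply rg_posint; auto. apply rgd_negint; auto.
Qed.

Lemma Kf_hh q m : 0 < q < 1 -> Kf q m = / 2 * Rpower q (- m ^ 2 + m) * / hh (q ^ 2) m.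
Proof.
  intros Hq. unfold Kf, hh. rewrite !qGamma_rg by (apply Q_bounds; auto). rewrite Rinv_mult. ring.
Qed.

Definition Sb (b : bool) (q : R) (w : C) (m : R) : R := Series (fun k => fT b q w k m).

Lemma F_parts q m w : 0 < q < 1 ->
  Re (Kq3_formula q m w) = Kf q m * (Sb true q w (- m) - Sb true q w m) /\
  Im (Kq3_formula q m w) = Kf q m * (Sb false q w (- m) - Sb false q w m).
Proof.
  intros Hq. rewrite Kq3_formula_Kf. unfold Sb.
  destruct (Iq3_parts q (- m) w Hq) as [H1 H2]. destruct (Iq3_parts q m w Hq) as [H3 H4].
  unfold Re, Im in *. unfold Cmult, Cminus, Cplus, Copp, RtoC. cbn [fst snd].
  rewrite H1, H2, H3, H4. split; ring.
Qed.

Lemma Sb_negint b q n w : 0 < q < 1 -> (exists z, n = IZR z) -> Sb b q w (- n) = Sb b q w n.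
Proof.
  intros Hq Hn. assert (H := Iq3_negint q n w Hq Hn).
  destruct (Iq3_parts q (- n) w Hq) as [H1 H2]. destruct (Iq3_parts q n w Hq) as [H3 H4].
  unfold Sb. destruct b.
  - rewrite <- H1, <- H3, H. auto.
  - rewrite <- H2, <- H4, H. auto.
Qed.

Lemma Rpower_cont q (f : nat -> R) (a : R) : 0 < q -> is_lim_seq f a ->
  is_lim_seq (fun j => Rpower q (f j)) (Rpower q a).
Proof.
  intros Hq Hf. apply (is_lim_seq_continuous (fun x => Rpower q x)); auto.
  apply continuity_pt_filterlim. apply (ex_derive_continuous (V := R_NormedModule)).
  unfold Rpower. auto_derive. auto.
Qed.

Lemma poly_lim n : is_lim_seq (fun j => - (n + ej j) ^ 2 + (n + ej j)) (- n ^ 2 + n).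
Proof.
  assert (H : is_lim_seq (fun j => n + ej j) (n + 0)).
  { apply is_lim_seq_plus'. apply is_lim_seq_const. apply ej_lim. }
  rewrite Rplus_0_r in H.
  apply is_lim_seq_plus'; auto. apply is_lim_seq_opp'. simpl.
  apply is_lim_seq_mult'; auto.
  apply is_lim_seq_mult'; auto. apply is_lim_seq_const.
Qed.

Lemma F_conv b q n w : 0 < q < 1 -> (exists z, n = IZR z) ->
  exists L : R, is_lim_seq (fun j => Kf q (n + ej j) * (Sb b q w (- (n + ej j)) - Sb b q w (n + ej j))) L.
Proof.
  intros Hq Hn. assert (HQ := Q_bounds q Hq).
  assert (HD1 := I_diff b q w (- n) (fun j => - ej j) Hq ej_neg_lim
                   (fun j => ltac:(apply Ropp_neq_0_compat; apply ej_nz))).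
  assert (HD2 := I_diff b q w n ej Hq ej_lim ej_nz).
  assert (HH := deriv_seq (hh (q ^ 2)) n (hhd (q ^ 2) n) ej (hh_derive _ n HQ) ej_lim ej_nz).
  destruct (hh_int (q ^ 2) n HQ Hn) as [Hh0 Hhd].
  assert (HP := Rpower_cont q _ _ ltac:(lra) (poly_lim n)).
  set (L1 := Series (fun k => fTd b q w k (- n))) in *.
  set (L2 := Series (fun k => fTd b q w k n)) in *.
  assert (HI := is_lim_seq_inv _ _ HH ltac:(simpl; intro H0; injection H0; auto)).
  simpl in HI.
  exists (/ 2 * Rpower q (- n ^ 2 + n) * (- L1 - L2) * / hhd (q ^ 2) n).
  apply is_lim_seq_ext with
    (fun j => / 2 * Rpower q (- (n + ej j) ^ 2 + (n + ej j)) *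
       (- ((Sb b q w (- n + - ej j) - Sb b q w (- n)) / - ej j) - (Sb b q w (n + ej j) - Sb b q w n) / ej j)
       * / ((hh (q ^ 2) (n + ej j) - hh (q ^ 2) n) / ej j)).
  - intros j. rewrite Kf_hh by auto. rewrite Hh0. rewrite Sb_negint by auto.
    replace (- (n + ej j)) with (- n + - ej j) by ring.
    assert (He := ej_nz j).
    unfold Rdiv. rewrite Rminus_0_r, Rinv_mult, Rinv_inv.
    set (ih := / hh (q ^ 2) (n + ej j)). field. auto.
  - apply is_lim_seq_mult'. apply is_lim_seq_mult'. apply is_lim_seq_mult'. apply is_lim_seq_const. auto.
    apply is_lim_seq_minus'. apply is_lim_seq_opp'. exact HD1. exact HD2.
    exact HI.
Qed.


Definition Clim (u : nat -> C) (l : C) : Prop :=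
  is_lim_seq (fun j => Re (u j)) (Re l) /\ is_lim_seq (fun j => Im (u j)) (Im l).

Lemma Clim_const c : Clim (fun _ => c) c.
Proof. split; apply is_lim_seq_const. Qed.

Lemma Clim_mult u v a b : Clim u a -> Clim v b -> Clim (fun j => Cmult (u j) (v j)) (Cmult a b).
Proof.
  intros [H1 H2] [H3 H4]. unfold Re, Im in *. split; simpl.
  - apply is_lim_seq_minus'; apply is_lim_seq_mult'; auto.
  - apply is_lim_seq_plus'; apply is_lim_seq_mult'; auto.
Qed.

Lemma Clim_minus u v a b : Clim u a -> Clim v b -> Clim (fun j => Cminus (u j) (v j)) (Cminus a b).
Proof.
  intros [H1 H2] [H3 H4]. unfold Re, Im in *. split; simpl.
  - apply is_lim_seq_plus'; auto. apply is_lim_seq_opp'; auto.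
  - apply is_lim_seq_plus'; auto. apply is_lim_seq_opp'; auto.
Qed.

Lemma Clim_opp u a : Clim u a -> Clim (fun j => Copp (u j)) (Copp a).
Proof. intros [H1 H2]. unfold Re, Im in *. split; simpl; apply is_lim_seq_opp'; auto. Qed.

Lemma Clim_ext u v l : (forall j, u j = v j) -> Clim u l -> Clim v l.
Proof.
  intros H [H1 H2]. split; eapply is_lim_seq_ext; try eassumption; intros; simpl; rewrite H; auto.
Qed.

Lemma Clim_unique u v a b : (forall j, u j = v j) -> Clim u a -> Clim v b -> a = b.
Proof.
  intros H [H1 H2] [H3 H4]. apply C_ext.
  - assert (H5 : is_lim_seq (fun j => Re (v j)) (Re a)) by (eapply is_lim_seq_ext; [|exact H1]; intros; simpl; rewrite H; auto).
    assert (E := is_lim_seq_unique _ _ H5). rewrite (is_lim_seq_unique _ _ H3) in E. injection E; auto.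
  - assert (H5 : is_lim_seq (fun j => Im (v j)) (Im a)) by (eapply is_lim_seq_ext; [|exact H2]; intros; simpl; rewrite H; auto).
    assert (E := is_lim_seq_unique _ _ H5). rewrite (is_lim_seq_unique _ _ H4) in E. injection E; auto.
Qed.

Lemma Clim_RtoC (f : nat -> R) (a : R) : is_lim_seq f a -> Clim (fun j => RtoC (f j)) (RtoC a).
Proof. intros H. split; simpl; auto. apply is_lim_seq_const. Qed.

Lemma cont_of_derive (f : R -> R) x : ex_derive f x -> continuity_pt f x.
Proof. intros H. apply continuity_pt_filterlim. apply (ex_derive_continuous (V := R_NormedModule)). auto. Qed.

Lemma Clim_Cpow z (f : nat -> R) (a : R) : is_lim_seq f a -> Clim (fun j => Cpow_pr z (f j)) (Cpow_pr z a).
Proof.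
  intros Hf. unfold Cpow_pr, Rpower. split; unfold Re, Im; simpl.
  - apply (is_lim_seq_continuous (fun x => exp (x * ln (Cmod z)) * cos (x * Carg z)) f a); auto.
    apply cont_of_derive. auto_derive. auto.
  - apply (is_lim_seq_continuous (fun x => exp (x * ln (Cmod z)) * sin (x * Carg z)) f a); auto.
    apply cont_of_derive. auto_derive. auto.
Qed.

Lemma affine_lim a b : is_lim_seq (fun j => a * ej j + b) b.
Proof.
  assert (H := is_lim_seq_plus' _ _ _ _ (is_lim_seq_mult' _ _ _ _ (is_lim_seq_const a) ej_lim) (is_lim_seq_const b)).
  rewrite Rmult_0_r, Rplus_0_l in H. exact H.
Qed.

Lemma affine_lim' (g : nat -> R) a b : (forall j, g j = a * ej j + b) -> is_lim_seq g b.
Proof. intros H. eapply is_lim_seq_ext; [|apply (affine_lim a b)]. intros; rewrite H; auto. Qed.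

Lemma int_m1 x : (exists z, x = IZR z) -> exists z, x - 1 = IZR z.
Proof. intros [z Hz]. exists (z - 1)%Z. rewrite minus_IZR. lra. Qed.
Lemma int_p1 x : (exists z, x = IZR z) -> exists z, x + 1 = IZR z.
Proof. intros [z Hz]. exists (z + 1)%Z. rewrite plus_IZR. lra. Qed.
Lemma nint_m1 x : ~ (exists z, x = IZR z) -> ~ (exists z, x - 1 = IZR z).
Proof. intros H [z Hz]. apply H. exists (z + 1)%Z. rewrite plus_IZR. lra. Qed.
Lemma nint_p1 x : ~ (exists z, x = IZR z) -> ~ (exists z, x + 1 = IZR z).
Proof. intros H [z Hz]. apply H. exists (z - 1)%Z. rewrite minus_IZR. lra. Qed.

Lemma Clim_Kq3 q n w : 0 < q < 1 -> (exists z, n = IZR z) ->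
  Clim (fun j => Kq3_formula q (n + ej j) w) (Kq3 q n w).
Proof.
  intros Hq Hn. rewrite Kq3_int by auto.
  destruct (F_conv true q n w Hq Hn) as [L1 H1].
  destruct (F_conv false q n w Hq Hn) as [L2 H2].
  assert (H1' : is_lim_seq (fun j => Re (Kq3_formula q (n + ej j) w)) L1).
  { eapply is_lim_seq_ext; [|exact H1]. intros j. symmetry. exact (proj1 (F_parts q (n + ej j) w Hq)). }
  assert (H2' : is_lim_seq (fun j => Im (Kq3_formula q (n + ej j) w)) L2).
  { eapply is_lim_seq_ext; [|exact H2]. intros j. symmetry. exact (proj2 (F_parts q (n + ej j) w Hq)). }
  unfold ej in H1', H2'.
  rewrite (is_lim_seq_unique _ _ H1'), (is_lim_seq_unique _ _ H2').
  split; unfold Re, Im in *; cbn [fst snd real]; [exact H1' | exact H2'].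
Qed.


Theorem proposition3p1 (q nu : R) (z : C) :
  0 < q < 1 -> slit_plane z ->
  Cmult (Cdiv (RtoC 2) (Cmult (RtoC (1 + q)) z))
        (qderiv q (fun w => Cmult (Cpow_pr w nu) (Kq3 q nu w)) z)
  = Copp (Cmult (RtoC (Rpower q (- ((nu - 1) / 2))))
                (Cmult (Cpow_pr z (nu - 1)) (Kq3 q (nu - 1) (Cmult (RtoC (sqrt q)) z))))
  /\
  Cmult (Cdiv (RtoC 2) (Cmult (RtoC (1 + q)) z))
        (qderiv q (fun w => Cmult (Cpow_pr w (- nu)) (Kq3 q nu w)) z)
  = Copp (Cmult (RtoC (Rpower q ((nu + 1) / 2)))
                (Cmult (Cpow_pr z (- nu - 1)) (Kq3 q (nu + 1) (Cmult (RtoC (sqrt q)) z)))).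
Proof.
  intros Hq Hz.
  assert (Hqz : slit_plane (Cmult (RtoC q) z)) by (apply slit_scal; auto; lra).
  assert (Hsz : slit_plane (Cmult (RtoC (sqrt q)) z)) by (apply slit_scal; auto; apply sqrt_pos; lra).
  destruct (classic (exists k, nu = IZR k)) as [Hint|Hnint].
  -
    set (mu := fun j => nu + ej j).
    assert (Hmu : is_lim_seq mu nu) by (apply (affine_lim' _ 1 nu); intros; unfold mu; ring).
    assert (K0 : forall w, Clim (fun j => Kq3_formula q (mu j) w) (Kq3 q nu w))
      by (intros; apply Clim_Kq3; auto).
    assert (Km : forall w, Clim (fun j => Kq3_formula q (mu j - 1) w) (Kq3 q (nu - 1) w)).
    { intros w. eapply Clim_ext; [|apply (Clim_Kq3 q (nu - 1) w Hq (int_m1 _ Hint))].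
      intros j. unfold mu. f_equal. ring. }
    assert (Kp : forall w, Clim (fun j => Kq3_formula q (mu j + 1) w) (Kq3 q (nu + 1) w)).
    { intros w. eapply Clim_ext; [|apply (Clim_Kq3 q (nu + 1) w Hq (int_p1 _ Hint))].
      intros j. unfold mu. f_equal. ring. }
    split.
    + unfold qderiv. 
      apply (Clim_unique
        (fun j => Cmult (Cdiv (RtoC 2) (Cmult (RtoC (1 + q)) z))
           (Cdiv (Cminus (Cmult (Cpow_pr z (mu j)) (Kq3_formula q (mu j) z))
                         (Cmult (Cpow_pr (Cmult (RtoC q) z) (mu j)) (Kq3_formula q (mu j) (Cmult (RtoC q) z))))
                 (Cmult (RtoC (1 - q)) z)))
        (fun j => Copp (Cmult (RtoC (Rpower q (- ((mu j - 1) / 2))))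
                (Cmult (Cpow_pr z (mu j - 1)) (Kq3_formula q (mu j - 1) (Cmult (RtoC (sqrt q)) z)))))).
      * intros j. apply (Fid_main q (mu j) z Hq Hz).
      * apply Clim_mult. apply Clim_const. unfold Cdiv. apply Clim_mult; [|apply Clim_const].
        apply Clim_minus; apply Clim_mult; auto; apply Clim_Cpow; auto.
      * apply Clim_opp. apply Clim_mult. apply Clim_RtoC. apply Rpower_cont. lra.
        apply (affine_lim' _ (- / 2)). intros; unfold mu; field.
        apply Clim_mult; auto. apply Clim_Cpow. apply (affine_lim' _ 1). intros; unfold mu; ring.
    + unfold qderiv.
      apply (Clim_unique
        (fun j => Cmult (Cdiv (RtoC 2) (Cmult (RtoC (1 + q)) z))
           (Cdiv (Cminus (Cmult (Cpow_pr z (- mu j)) (Kq3_formula q (mu j) z))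
                         (Cmult (Cpow_pr (Cmult (RtoC q) z) (- mu j)) (Kq3_formula q (mu j) (Cmult (RtoC q) z))))
                 (Cmult (RtoC (1 - q)) z)))
        (fun j => Copp (Cmult (RtoC (Rpower q ((mu j + 1) / 2)))
                (Cmult (Cpow_pr z (- mu j - 1)) (Kq3_formula q (mu j + 1) (Cmult (RtoC (sqrt q)) z)))))).
      * intros j. apply (Fid_main2 q (mu j) z Hq Hz).
      * apply Clim_mult. apply Clim_const. unfold Cdiv. apply Clim_mult; [|apply Clim_const].
        apply Clim_minus; apply Clim_mult; auto; apply Clim_Cpow; apply (affine_lim' _ (-1)); intros; unfold mu; ring.
      * apply Clim_opp. apply Clim_mult. apply Clim_RtoC. apply Rpower_cont. lra.
        apply (affine_lim' _ (/ 2)). intros; unfold mu; field.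
        apply Clim_mult; auto. apply Clim_Cpow. apply (affine_lim' _ (-1)). intros; unfold mu; ring.
  -
    unfold qderiv.
    rewrite !(Kq3_nonint q nu) by auto.
    rewrite (Kq3_nonint q (nu - 1)) by (apply nint_m1; auto).
    rewrite (Kq3_nonint q (nu + 1)) by (apply nint_p1; auto).
    split.
    + apply (Fid_main q nu z Hq Hz).
    + apply (Fid_main2 q nu z Hq Hz).
Qed.
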